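(* Let $X$ be a mixed-exponential Lévy process with $\psi'(0)<0$, let $q>0$, $\theta>0$, $\lambda\in(0,\lambda^*]$, and assume that the roots $\rho$ of $\Psi(-\mathrm i\rho)=-\lambda$ and the roots of $\Psi(-\mathrm i\rho)=q$ are all distinct, and that $\bar\phi(-\lambda)$, $\rho^+_k(-\lambda)$ ($k=0,\dots,m^+$), $-\theta$, $\rho_j^-(q)$ ($j=0,\dots,m^-$) are all distinct. Let $\widehat\mu_\lambda$ be the rational function $\widehat\mu_\lambda(\theta)=\frac{\bar\phi(-\lambda)}{\bar\phi(-\lambda)+\theta}\frac{\rho_0^+(-\lambda)}{\rho_0^+(-\lambda)+\theta}\prod_{j=1}^{m^+}\frac{1+\theta/\alpha_j^+}{1+\theta/\rho_j^+(-\lambda)}$. Then for every $a\in(0,\bar\phi(-\lambda))$, $$\frac1{2\pi\mathrm i}\int_{a-\mathrm i\infty}^{a+\mathrm i\infty}\frac{\Psi^+(q,\mathrm i\theta)\,\widehat\mu_\lambda(-u)\,\Psi^-(q,-\mathrm iu)}{u+\theta}\,du=\frac{q}{q+\lambda}\widehat\mu_\lambda(\theta).$$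
   Context: Mixed-exponential Lévy process: $X_t=X_0+\eta t+\sigma W_t+\sum_{j=1}^{N_t}U_j$ ($W$ Wiener, $\sigma>0$, $N$ Poisson of rate $\ell$, $U_j$ i.i.d. with density $pf_+ +(1-p)f_-$, $f_\pm(x)=\sum_{k=1}^{m^\pm}a_k^\pm\alpha_k^\pm e^{-\alpha_k^\pm|x|}\mathbf 1_{\mathbb R^+}(\pm x)$ probability densities, $\alpha_k^\pm>0$). Characteristic exponent $\Psi(\theta)=-\frac{\sigma^2}2\theta^2+\mathrm i\eta\theta+p\sum_k a_k^+\frac{\mathrm i\theta}{\alpha_k^+-\mathrm i\theta}-(1-p)\sum_j a_j^-\frac{\mathrm i\theta}{\alpha_j^-+\mathrm i\theta}$; $\psi(\theta)=\Psi(-\mathrm i\theta)$, $-\lambda^*=\inf\psi=\psi(\theta^* )<0$, $\bar\phi$ the inverse of $\psi$ left of $\theta^*$. For $q>0$, $\rho_k^+(q)$ ($k=0..m^+$) and $\rho_j^-(q)$ ($j=0..m^-$) are the roots of $\Psi(-\mathrm i\rho)=q$ with positive, resp. negative, real part; $\rho_k^+(-\lambda)$ are the roots of $\Psi(-\mathrm i\rho)=-\lambda$ with $\Re\rho>\bar\phi(-\lambda)$. Wiener–Hopf factors: $\Psi^+(q,\theta)=\big(1-\frac{\mathrm i\theta}{\rho_0^+(q)}\big)^{-1}\prod_{k=1}^{m^+}\frac{1-\mathrm i\theta/\alpha_k^+}{1-\mathrm i\theta/\rho_k^+(q)}$, $\Psi^-(q,\theta)=\big(1-\frac{\mathrm i\theta}{\rho_0^-(q)}\big)^{-1}\prod_{k=1}^{m^-}\frac{1+\mathrm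 i\theta/\alpha_k^-}{1-\mathrm i\theta/\rho_k^-(q)}$. *)

(* Defs.v *)
From Stdlib Require Import Reals List.
Open Scope R_scope.

Definition Cx : Type := (R * R)%type.
Definition Re (z : Cx) : R := fst z.
Definition Im (z : Cx) : R := snd z.
Definition RtoC (x : R) : Cx := (x, 0).
Definition C0 : Cx := (0, 0).
Definition C1 : Cx := (1, 0).
Definition Ci : Cx := (0, 1).
Definition Cadd (z w : Cx) : Cx := (fst z + fst w, snd z + snd w).
Definition Copp (z : Cx) : Cx := (- fst z, - snd z).
Definition Csub (z w : Cx) : Cx := Cadd z (Copp w).
Definition Cmul (z w : Cx) : Cx :=
  (fst z * fst w - snd z * snd w, fst z * snd w + snd z * fst w).
Definition Cinv (z : Cx) : Cx :=
  (fst z / (fst z ^ 2 + snd z ^ 2), - snd z / (fst z ^ 2 + snd z ^ 2)).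
Definition Cdiv (z w : Cx) : Cx := Cmul z (Cinv w).
Definition Cnorm (z : Cx) : R := sqrt (fst z ^ 2 + snd z ^ 2).

(* sum_{k=1}^n f k  and  prod_{k=1}^n f k *)
Fixpoint Rsum1 (n : nat) (f : nat -> R) : R :=
  match n with O => 0 | S n' => Rsum1 n' f + f n end.
Fixpoint Csum1 (n : nat) (f : nat -> Cx) : Cx :=
  match n with O => C0 | S n' => Cadd (Csum1 n' f) (f n) end.
Fixpoint Cprod1 (n : nat) (f : nat -> Cx) : Cx :=
  match n with O => C1 | S n' => Cmul (Cprod1 n' f) (f n) end.

Definition C_deriv (f : Cx -> Cx) (z d : Cx) : Prop :=
  forall eps, eps > 0 -> exists del, del > 0 /\
    forall h : Cx, h <> C0 -> Cnorm h < del ->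
      Cnorm (Csub (Cdiv (Csub (f (Cadd z h)) (f z)) h) d) < eps.

Definition improper_RInt (f : R -> R) (l : R) : Prop :=
  (forall a b, inhabited (Riemann_integrable f a b)) /\
  forall eps, eps > 0 -> exists T, forall a b (pr : Riemann_integrable f a b),
      a <= - T -> T <= b -> Rabs (RiemannInt pr - l) < eps.

(* (1/(2 pi i)) int_{a - i oo}^{a + i oo} f(u) du  converges (as an improper
   integral) and equals L.  Parametrisation u = a + i t, du = i dt. *)
Definition vertical_integral (f : Cx -> Cx) (a : R) (L : Cx) : Prop :=
  let g := fun t : R =>
    Cmul (Cinv (Cmul (RtoC (2 * PI)) Ci)) (Cmul (f (Cadd (RtoC a) (Cmul Ci (RtoC t)))) Ci) in
  improper_RInt (fun t => Re (g t)) (Re L) /\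
  improper_RInt (fun t => Im (g t)) (Im L).

Record MEproc := {
  sigma : R; eta : R; pp : R;
  mplus : nat; mminus : nat;
  aplus : nat -> R; alplus : nat -> R;     (* a_k^+, alpha_k^+, k = 1..m^+ *)
  aminus : nat -> R; alminus : nat -> R    (* a_j^-, alpha_j^-, j = 1..m^- *)
}.

(* standing assumptions: sigma > 0, p in [0,1], f_+ and f_- probability
   densities (nonnegative, total mass sum_k a_k = 1), alpha_k^pm > 0 *)
Definition ME_valid (X : MEproc) : Prop :=
  sigma X > 0 /\ 0 <= pp X <= 1 /\
  (forall k, (1 <= k <= mplus X)%nat -> alplus X k > 0) /\
  (forall k, (1 <= k <= mminus X)%nat -> alminus X k > 0) /\
  Rsum1 (mplus X) (aplus X) = 1 /\ Rsum1 (mminus X) (aminus X) = 1 /\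
  (forall x, x > 0 -> 0 <= Rsum1 (mplus X) (fun k => aplus X k * alplus X k * exp (- alplus X k * x))) /\
  (forall x, x > 0 -> 0 <= Rsum1 (mminus X) (fun k => aminus X k * alminus X k * exp (- alminus X k * x))).

Definition Psi (X : MEproc) (th : Cx) : Cx :=
  let ith := Cmul Ci th in
  Cadd (Cadd (Cmul (RtoC (- sigma X ^ 2 / 2)) (Cmul th th)) (Cmul (RtoC (eta X)) ith))
   (Csub
     (Cmul (RtoC (pp X)) (Csum1 (mplus X) (fun k =>
        Cmul (RtoC (aplus X k)) (Cdiv ith (Csub (RtoC (alplus X k)) ith)))))
     (Cmul (RtoC (1 - pp X)) (Csum1 (mminus X) (fun j =>
        Cmul (RtoC (aminus X j)) (Cdiv ith (Cadd (RtoC (alminus X j)) ith)))))).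

Definition psiC (X : MEproc) (z : Cx) : Cx := Psi X (Cmul (Copp Ci) z).
Definition psi (X : MEproc) (x : R) : R := Re (psiC X (RtoC x)).

Definition psi_dom (X : MEproc) (x : R) : Prop :=
  (forall k, (1 <= k <= mplus X)%nat -> x < alplus X k) /\
  (forall j, (1 <= j <= mminus X)%nat -> - alminus X j < x).

Definition not_pole (X : MEproc) (z : Cx) : Prop :=
  (forall k, (1 <= k <= mplus X)%nat -> z <> RtoC (alplus X k)) /\
  (forall j, (1 <= j <= mminus X)%nat -> z <> RtoC (- alminus X j)).

Definition is_root (X : MEproc) (c : Cx) (z : Cx) : Prop :=
  not_pole X z /\ psiC X z = c.

(* all roots of Psi(-i rho) = c are distinct (simple) *)
Definition simple_roots (X : MEproc) (c : Cx) : Prop :=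
  forall z, is_root X c z -> forall d, C_deriv (psiC X) z d -> d <> C0.

Definition root_enum (X : MEproc) (c : Cx) (P : Cx -> Prop) (n : nat) (r : nat -> Cx) : Prop :=
  (forall k, (k <= n)%nat -> is_root X c (r k) /\ P (r k)) /\
  (forall k l, (k <= n)%nat -> (l <= n)%nat -> r k = r l -> k = l) /\
  (forall z, is_root X c z -> P z -> exists k, (k <= n)%nat /\ z = r k).

(* Wiener-Hopf factors, given the roots rho_k^+(q) (rp) resp. rho_j^-(q) (rm) *)
Definition Psi_plus (X : MEproc) (rp : nat -> Cx) (xi : Cx) : Cx :=
  let ixi := Cmul Ci xi in
  Cmul (Cinv (Csub C1 (Cdiv ixi (rp O))))
    (Cprod1 (mplus X) (fun k =>
       Cdiv (Csub C1 (Cdiv ixi (RtoC (alplus X k)))) (Csub C1 (Cdiv ixi (rp k))))).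

Definition Psi_minus (X : MEproc) (rm : nat -> Cx) (xi : Cx) : Cx :=
  let ixi := Cmul Ci xi in
  Cmul (Cinv (Csub C1 (Cdiv ixi (rm O))))
    (Cprod1 (mminus X) (fun k =>
       Cdiv (Cadd C1 (Cdiv ixi (RtoC (alminus X k)))) (Csub C1 (Cdiv ixi (rm k))))).

(* hat mu_lambda, given phibar(-lambda) = phib and rl k = rho_k^+(-lambda) *)
Definition mu_hat (X : MEproc) (phib : R) (rl : nat -> Cx) (z : Cx) : Cx :=
  Cmul (Cmul (Cdiv (RtoC phib) (Cadd (RtoC phib) z)) (Cdiv (rl O) (Cadd (rl O) z)))
    (Cprod1 (mplus X) (fun j =>
       Cdiv (Cadd C1 (Cdiv z (RtoC (alplus X j)))) (Cadd C1 (Cdiv z (rl j))))).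

(* Main.v *)
From Stdlib Require Import Reals List Lra Lia FunctionalExtensionality.
From Coquelicot Require Import Coquelicot.
Require Import Defs.
Open Scope R_scope.


Lemma E_Cadd : Defs.Cadd = Cplus. Proof. reflexivity. Qed.
Lemma E_Cmul : Defs.Cmul = Cmult. Proof. reflexivity. Qed.
Lemma E_Copp : Defs.Copp = Complex.Copp. Proof. reflexivity. Qed.
Lemma E_Csub : Defs.Csub = Cminus. Proof. reflexivity. Qed.
Lemma E_Cinv : Defs.Cinv = Complex.Cinv. Proof. reflexivity. Qed.
Lemma E_Cdiv : Defs.Cdiv = Complex.Cdiv. Proof. reflexivity. Qed.
Lemma E_RtoC : Defs.RtoC = Complex.RtoC. Proof. reflexivity. Qed.
Lemma E_C1 : Defs.C1 = Complex.RtoC 1. Proof. reflexivity. Qed.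
Lemma E_C0 : Defs.C0 = Complex.RtoC 0. Proof. reflexivity. Qed.
Lemma E_Ci : Defs.Ci = Complex.Ci. Proof. reflexivity. Qed.
Ltac toC := rewrite ?E_Cadd, ?E_Cmul, ?E_Csub, ?E_Copp, ?E_Cinv, ?E_Cdiv, ?E_RtoC, ?E_C1, ?E_C0, ?E_Ci.



Section SA.
Open Scope C_scope.
Definition Ceq_dec (x y : C) : {x = y} + {x <> y}.
Proof.
  destruct x as [a b], y as [c d].
  destruct (Req_EM_T a c) as [->|H]; [destruct (Req_EM_T b d) as [->|H']|].
  - left; reflexivity.
  - right; intro E; inversion E; auto.
  - right; intro E; inversion E; auto.
Defined.

Definition prodl (l : list C) (f : C -> C) : C := fold_right (fun x acc => f x * acc) 1 l.
Definition suml (l : list C) (f : C -> C) : C := fold_right (fun x acc => f x + acc) 0 l.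

Lemma prodl_app l1 l2 f : prodl (l1 ++ l2) f = prodl l1 f * prodl l2 f.
Proof. induction l1; simpl. ring. unfold prodl in *; simpl; rewrite IHl1; ring. Qed.
Lemma suml_app l1 l2 f : suml (l1 ++ l2) f = suml l1 f + suml l2 f.
Proof. induction l1; simpl. ring. unfold suml in *; simpl; rewrite IHl1; ring. Qed.
Lemma prodl_ext l f g : (forall x, In x l -> f x = g x) -> prodl l f = prodl l g.
Proof. induction l; simpl; intros H; auto. unfold prodl in *; simpl. rewrite H, IHl; auto. Qed.
Lemma suml_ext l f g : (forall x, In x l -> f x = g x) -> suml l f = suml l g.
Proof. induction l; simpl; intros H; auto. unfold suml in *; simpl. rewrite H, IHl; auto. Qed.
Lemma prodl_neq0 l (f : C -> C) : (forall x, In x l -> f x <> 0) -> prodl l f <> 0.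
Proof.
  induction l; intros H.
  - unfold prodl; simpl. intro E; inversion E; lra.
  - unfold prodl; simpl; fold (prodl l f). apply Cmult_neq_0.
    apply H; simpl; auto. apply IHl; intros; apply H; simpl; auto.
Qed.
Lemma suml_scal l f k : suml l f * k = suml l (fun x => f x * k).
Proof. induction l; simpl. ring. unfold suml in *; simpl. rewrite <- IHl; ring. Qed.
Lemma suml_plus l f g : suml l (fun x => f x + g x) = suml l f + suml l g.
Proof. induction l; simpl. ring. unfold suml in *; simpl. rewrite IHl; ring. Qed.
Lemma suml_zero l : suml l (fun _ => 0) = 0.
Proof. induction l; simpl. ring. unfold suml in *; simpl. rewrite IHl; ring. Qed.

Lemma suml_single l (F : C -> C) x : NoDup l -> In x l -> (forall y, In y l -> y <> x -> F y = 0) ->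
  suml l F = F x.
Proof.
  induction l as [|a l IH]; simpl; intros Hn Hin H. contradiction.
  inversion Hn; subst. unfold suml; simpl; fold (suml l F).
  destruct Hin as [->|Hin].
  - rewrite (suml_ext l F (fun _ => 0)). rewrite suml_zero; ring.
    intros y Hy. apply H; auto. intro; subst; contradiction.
  - rewrite IH; auto. rewrite H; auto. ring. intro; subst; contradiction.
Qed.

Fixpoint is_poly (d : nat) (f : C -> C) : Prop :=
  match d with
  | O => exists k, forall z, f z = k
  | S d' => exists k g, is_poly d' g /\ forall z, f z = k + z * g z
  end.

Lemma poly_ext d f g : (forall z, f z = g z) -> is_poly d f -> is_poly d g.
Proof.
  destruct d; simpl; intros E H.
  - destruct H as [k Hk]; exists k; intro z; rewrite <- E; auto.
  - destruct H as [k [h [Hh Hz]]]; exists k, h; split; auto; intro z; rewrite <- E; auto.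
Qed.

Lemma poly_const d k : is_poly d (fun _ => k).
Proof.
  induction d; simpl. exists k; auto.
  exists k, (fun _ => 0); split. apply (poly_ext d (fun _ => 0)). auto.
  clear IHd; induction d; simpl. exists 0; auto. exists 0, (fun _ => 0); split; auto. intros; ring.
  intros; ring.
Qed.

Lemma poly_S d f : is_poly d f -> is_poly (S d) f.
Proof.
  revert f; induction d; intros f H.
  - destruct H as [k Hk]; simpl. exists k, (fun _ => 0); split. exists 0; auto.
    intros z; rewrite Hk; ring.
  - destruct H as [k [g [Hg Hz]]]. exists k, g; split; auto.
Qed.

Lemma poly_le d e f : (d <= e)%nat -> is_poly d f -> is_poly e f.
Proof. induction 1; auto. intros; apply poly_S; auto. Qed.

Lemma poly_add d f g : is_poly d f -> is_poly d g -> is_poly d (fun z => f z + g z).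
Proof.
  revert f g; induction d; intros f g Hf Hg.
  - destruct Hf as [k Hk], Hg as [k' Hk']; exists (k + k'); intro; rewrite Hk, Hk'; auto.
  - destruct Hf as [k [f' [Hf' Hf]]], Hg as [k' [g' [Hg' Hg]]].
    exists (k + k'), (fun z => f' z + g' z); split; auto.
    intro z; rewrite Hf, Hg; ring.
Qed.

Lemma poly_scal d c f : is_poly d f -> is_poly d (fun z => c * f z).
Proof.
  revert f; induction d; intros f Hf.
  - destruct Hf as [k Hk]; exists (c * k); intro; rewrite Hk; auto.
  - destruct Hf as [k [f' [Hf' Hf]]]. exists (c * k), (fun z => c * f' z); split; auto.
    intro z; rewrite Hf; ring.
Qed.

Lemma poly_mulX d f : is_poly d f -> is_poly (S d) (fun z => z * f z).
Proof. intros H. exists 0, f; split; auto. intros; ring. Qed.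

Lemma poly_mul d e f g : is_poly d f -> is_poly e g -> is_poly (d + e) (fun z => f z * g z).
Proof.
  revert f; induction d; intros f Hf Hg.
  - destruct Hf as [k Hk]. simpl. apply (poly_ext e (fun z => k * g z)).
    intro; rewrite Hk; auto. apply poly_scal; auto.
  - destruct Hf as [k [f' [Hf' Hf]]]. simpl.
    apply (poly_ext (S (d + e)) (fun z => k * g z + z * (f' z * g z))).
    intro z; rewrite Hf; ring.
    apply poly_add. apply poly_le with e. lia. apply poly_scal; auto.
    apply poly_mulX; auto.
Qed.

Lemma poly_lin b e : is_poly 1 (fun z => b * z + e).
Proof. exists e, (fun _ => b); split. exists b; auto. intros; ring. Qed.

Lemma poly_prodl l : is_poly (length l) (fun z => prodl l (fun c => z - c)).
Proof.
  induction l; simpl. exists 1; auto.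
  apply (poly_ext (1 + length l) (fun z => (1 * z + - a) * prodl l (fun c => z - c))).
  intros; unfold prodl; simpl; ring.
  apply poly_mul; auto. apply poly_lin.
Qed.

Lemma poly_suml d l F : (forall c, In c l -> is_poly d (F c)) ->
  is_poly d (fun z => suml l (fun c => F c z)).
Proof.
  induction l; simpl; intros H. apply poly_const.
  apply (poly_ext d (fun z => F a z + suml l (fun c => F c z))). reflexivity.
  apply poly_add; auto.
Qed.

Lemma poly_factor d f r : is_poly (S d) f ->
  exists h, is_poly d h /\ forall z, f z = f r + (z - r) * h z.
Proof.
  revert f; induction d; intros f Hf.
  - destruct Hf as [k [g [[k' Hg] Hz]]]. exists (fun _ => k'); split. exists k'; auto.
    intros z; rewrite !Hz, !Hg; ring.
  - destruct Hf as [k [g [Hg Hz]]].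
    destruct (IHd g Hg) as [h [Hh Hgz]].
    exists (fun z => g r + z * h z); split.
    + exists (g r), h; split; auto.
    + intros z; rewrite !Hz, (Hgz z); ring.
Qed.

Lemma poly_roots_prod l : forall d (f : C -> C), is_poly d f -> NoDup l -> length l = d ->
  (forall r, In r l -> f r = 0) -> exists k, forall z, f z = k * prodl l (fun c => z - c).
Proof.
  induction l as [|r l IH]; intros d f Hf Hn Hl Hr; simpl in Hl.
  - subst d. destruct Hf as [k Hk]. exists k; intro; rewrite Hk; unfold prodl; simpl; ring.
  - subst d. inversion Hn; subst.
    destruct (poly_factor _ f r Hf) as [h [Hh Hz]].
    assert (Hr0 : f r = 0) by (apply Hr; simpl; auto).
    destruct (IH (length l) h Hh) as [k Hk]; auto.
    + intros r' Hr'. assert (E : f r' = 0) by (apply Hr; simpl; auto).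
      rewrite Hz, Hr0 in E.
      assert (Hne : r' - r <> 0).
      { intro E'. apply H1. replace r with r'; auto.
        apply (f_equal (fun w => w + r)) in E'. rewrite Cplus_0_l in E'. rewrite <- E'. ring. }
      replace (h r') with ((0 + (r' - r) * h r') / (r' - r)) by (field; auto).
      rewrite E. field; auto.
    + exists k; intro z. rewrite Hz, Hr0, Hk. unfold prodl; simpl. ring.
Qed.

Lemma Csub_neq0 x y : x <> y -> x - y <> 0.
Proof.
  intros H E. apply H. apply (f_equal (fun w => w + y)) in E.
  rewrite Cplus_0_l in E. rewrite <- E. ring.
Qed.

Lemma poly_zero l d (f : C -> C) : is_poly d f -> NoDup l -> (d < length l)%nat ->
  (forall r, In r l -> f r = 0) -> forall z, f z = 0.
Proof.
  intros Hf Hn Hlen Hr.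
  assert (Hsp : exists l1 x l2, l = l1 ++ x :: l2 /\ length l1 = d).
  { exists (firstn d l), (nth d l 0), (skipn (S d) l). split.
    - clear -Hlen. revert d Hlen; induction l; simpl; intros d H. lia.
      destruct d; simpl; auto. f_equal. apply IHl; lia.
    - apply firstn_length_le; lia. }
  destruct Hsp as [l1 [x [l2 [-> Hl1]]]].
  apply NoDup_remove in Hn as Hn'. destruct Hn' as [Hn1 Hx].
  assert (Hn1' : NoDup l1). { apply NoDup_app_remove_r in Hn1; auto. }
  destruct (poly_roots_prod l1 d f Hf Hn1' Hl1) as [k Hk].
  { intros r Hr1; apply Hr; apply in_or_app; auto. }
  assert (Hfx : f x = 0) by (apply Hr; apply in_or_app; simpl; auto).
  rewrite Hk in Hfx.
  assert (Hp : prodl l1 (fun c => x - c) <> 0).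
  { apply prodl_neq0. intros c Hc. apply Csub_neq0. intro; subst. apply Hx; apply in_or_app; auto. }
  assert (k = 0).
  { replace k with (k * prodl l1 (fun c => x - c) / prodl l1 (fun c => x - c)) by (field; auto).
    rewrite Hfx. field; auto. }
  intros z; rewrite Hk, H; ring.
Qed.

End SA.

Section SB.
Open Scope C_scope.

Lemma prodl_cons x l f : prodl (x :: l) f = f x * prodl l f. Proof. reflexivity. Qed.
Lemma suml_cons x l f : suml (x :: l) f = f x + suml l f. Proof. reflexivity. Qed.
Lemma prodl_nil f : prodl nil f = 1. Proof. reflexivity. Qed.
Lemma suml_nil f : suml nil f = 0. Proof. reflexivity. Qed.

Definition Pi' (l : list C) (c : C) : C := prodl l (fun c' => if Ceq_dec c' c then 1 else c - c').
Definition Qf (l : list C) (c z : C) : C := prodl l (fun c' => if Ceq_dec c' c then 1 else z - c').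

Lemma split_in (l : list C) c : In c l -> NoDup l -> exists l1 l2, l = l1 ++ c :: l2 /\ ~ In c (l1 ++ l2).
Proof.
  intros Hin Hn. destruct (in_split c l Hin) as [l1 [l2 ->]].
  exists l1, l2; split; auto. apply NoDup_remove_2; auto.
Qed.

Lemma prodl_zero l (f : C -> C) x : In x l -> f x = 0 -> prodl l f = 0.
Proof.
  induction l; simpl; intros Hin Hf. contradiction.
  unfold prodl; simpl; fold (prodl l f). destruct Hin as [->|Hin].
  rewrite Hf; ring. rewrite IHl; auto; ring.
Qed.

Lemma Qf_split l c z l1 l2 : l = l1 ++ c :: l2 -> ~ In c (l1 ++ l2) ->
  Qf l c z = prodl (l1 ++ l2) (fun c' => z - c').
Proof.
  intros -> Hn. unfold Qf. rewrite !prodl_app, prodl_cons.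
  destruct (Ceq_dec c c) as [_|H]; [|congruence].
  rewrite (prodl_ext l1 _ (fun c' => z - c')), (prodl_ext l2 _ (fun c' => z - c')). ring.
  - intros x Hx; destruct (Ceq_dec x c); auto. subst; exfalso; apply Hn; apply in_or_app; auto.
  - intros x Hx; destruct (Ceq_dec x c); auto. subst; exfalso; apply Hn; apply in_or_app; simpl; auto.
Qed.

Lemma Qf_poly l c : In c l -> NoDup l -> is_poly (pred (length l)) (Qf l c).
Proof.
  intros Hin Hn. destruct (split_in l c Hin Hn) as [l1 [l2 [E Hn']]].
  apply (poly_ext _ (fun z => prodl (l1 ++ l2) (fun c' => z - c'))).
  intros z; symmetry; apply Qf_split; auto.
  replace (pred (length l)) with (length (l1 ++ l2)). apply poly_prodl.
  subst l. rewrite !length_app; simpl. lia.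
Qed.

Lemma Qf_prod l c z : In c l -> NoDup l -> prodl l (fun c' => z - c') = (z - c) * Qf l c z.
Proof.
  intros Hin Hn. destruct (split_in l c Hin Hn) as [l1 [l2 [E Hn']]].
  rewrite (Qf_split l c z l1 l2 E Hn'). subst l. rewrite !prodl_app, prodl_cons. ring.
Qed.

Lemma Qf_zero l c c' : In c' l -> c' <> c -> Qf l c c' = 0.
Proof.
  intros Hin Hne. unfold Qf. apply (prodl_zero l _ c' Hin).
  destruct (Ceq_dec c' c); [congruence|]. ring.
Qed.

Lemma Pi'_neq0 l c : Pi' l c <> 0.
Proof.
  unfold Pi'. apply prodl_neq0. intros x Hx. destruct (Ceq_dec x c).
  intro E; inversion E; lra. apply Csub_neq0; auto.
Qed.

Lemma suml_minus l (F G : C -> C) : suml l (fun x => F x - G x) = suml l F - suml l G.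
Proof. induction l; simpl. ring. unfold suml in *; simpl. rewrite IHl; ring. Qed.

Lemma PF l (f : C -> C) z : NoDup l -> l <> nil -> is_poly (pred (length l)) f -> ~ In z l ->
  f z / prodl l (fun c => z - c) = suml l (fun c => f c / Pi' l c / (z - c)).
Proof.
  intros Hn Hne Hf Hz.
  assert (Hg : forall w, f w - suml l (fun c => f c / Pi' l c * Qf l c w) = 0).
  { apply (poly_zero l (pred (length l))); auto.
    - apply poly_add; auto. apply (poly_ext _ (fun w => -1 * suml l (fun c => f c / Pi' l c * Qf l c w))).
      intros; ring. apply poly_scal. apply poly_suml. intros c Hc. apply poly_scal. apply Qf_poly; auto.
    - destruct l; [congruence|]. simpl; lia.
    - intros r Hr. rewrite (suml_single l _ r Hn Hr).
      + replace (Qf l r r) with (Pi' l r) by reflexivity. field. apply Pi'_neq0.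
      + intros y Hy Hyr. rewrite Qf_zero; auto. ring. }
  assert (E : f z = suml l (fun c => f c / Pi' l c * Qf l c z)).
  { specialize (Hg z). apply (f_equal (fun w => w + suml l (fun c => f c / Pi' l c * Qf l c z))) in Hg.
    rewrite Cplus_0_l in Hg. rewrite <- Hg. ring. }
  assert (HP : prodl l (fun c => z - c) <> 0).
  { apply prodl_neq0. intros x Hx. apply Csub_neq0. intro; subst; contradiction. }
  rewrite E. unfold Complex.Cdiv at 1. rewrite suml_scal. apply suml_ext. intros c Hc.
  rewrite (Qf_prod l c z Hc Hn). field. repeat split; try apply Pi'_neq0;
  try (apply Csub_neq0; intro; subst; contradiction).
  intro E'; apply HP. rewrite (Qf_prod l c z Hc Hn), E'. ring.
Qed.

Lemma exists_notin (l : list C) : exists z, ~ In z l.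
Proof.
  assert (H : exists M, forall c, In c l -> fst c < M).
  { induction l. exists 0%R; simpl; tauto.
    destruct IHl as [M HM]. exists (Rmax M (fst a + 1)%R). intros c [<-|Hc].
    apply Rlt_le_trans with (fst a + 1)%R; [lra|apply Rmax_r].
    apply Rlt_le_trans with M; [auto|apply Rmax_l]. }
  destruct H as [M HM]. exists (M, 0%R). intros Hin. specialize (HM _ Hin). simpl in HM; lra.
Qed.

Lemma PF_sum0 l (f : C -> C) : NoDup l -> (2 <= length l)%nat -> is_poly (length l - 2) f ->
  suml l (fun c => f c / Pi' l c) = 0.
Proof.
  intros Hn Hl Hf. destruct (exists_notin l) as [z Hz].
  assert (Hne : l <> nil) by (intro E; subst l; simpl in Hl; lia).
  assert (H1 := PF l f z Hn Hne (poly_le (length l - 2) (pred (length l)) f ltac:(lia) Hf) Hz).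
  assert (H2 := PF l (fun w => w * f w) z Hn Hne).
  assert (Hp : is_poly (pred (length l)) (fun w => w * f w)).
  { replace (pred (length l)) with (S (length l - 2)) by lia. apply poly_mulX; auto. }
  specialize (H2 Hp Hz).
  transitivity (z * suml l (fun c => f c / Pi' l c / (z - c)) - suml l (fun c => (c * f c) / Pi' l c / (z - c))).
  - rewrite Cmult_comm, suml_scal, <- suml_minus. apply suml_ext. intros c Hc.
    field. repeat split; try apply Pi'_neq0; try (apply Csub_neq0; intro; subst; contradiction).
  - rewrite <- H1, <- H2. field.
    apply prodl_neq0. intros x Hx. apply Csub_neq0. intro; subst; contradiction.
Qed.

End SB.

Section SC.

Definition Tm (x y rho ka t : R) := (rho*x + ka*(t - y))/(x^2 + (t-y)^2).
Definition Am (x y rho ka t : R) := rho*atan((t-y)/x) + ka/2*ln(x^2 + (t-y)^2).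

Lemma sq_pos x : x <> 0 -> 0 < x * x.
Proof. intros H; destruct (Rtotal_order x 0) as [h|[h|h]]; [nra|contradiction|nra]. Qed.

Lemma Am_deriv x y rho ka t : x <> 0 -> is_derive (Am x y rho ka) t (Tm x y rho ka t).
Proof.
  intros Hx. assert (H1 := sq_pos x Hx). unfold Am, Tm. auto_derive.
  - change R in t. rewrite !Rmult_1_r. pose proof (Rle_0_sqr (t + - y)); unfold Rsqr in *. lra.
  - change R in t. pose proof (Rle_0_sqr (t - y)); unfold Rsqr in *.
    assert (Hd : x ^ 2 + (t - y) ^ 2 <> 0) by (simpl; nra).
    assert (Hd2 : 1 + (t - y) / x * ((t - y) / x) <> 0).
    { assert (0 <= (t - y) / x * ((t - y) / x)) by nra. lra. }
    replace (t + - y) with (t - y) by ring.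
    assert (E1 : 1 + (t - y) * / x * ((t - y) * / x * 1) = (x ^ 2 + (t - y) ^ 2) / (x * x)) by (field; auto).
    assert (E2 : x * (x * 1) + (t - y) * ((t - y) * 1) = x ^ 2 + (t - y) ^ 2) by ring.
    rewrite E1, E2. field. split; auto.
Qed.

Lemma Tm_ex_derive x y rho ka t : x <> 0 -> ex_derive (Tm x y rho ka) t.
Proof.
  intros Hx. assert (H1 := sq_pos x Hx). unfold Tm. auto_derive. change R in t.
  rewrite !Rmult_1_r. pose proof (Rle_0_sqr (t + - y)); unfold Rsqr in *. lra.
Qed.

Definition rsum (l : list C) (g : C -> R) : R := fold_right (fun c acc => g c + acc) 0 l.

Lemma rsum_fst l (F : C -> C) : fst (suml l F) = rsum l (fun c => fst (F c)).
Proof. induction l; simpl; auto. unfold suml in *; simpl. rewrite <- IHl; auto. Qed.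
Lemma rsum_snd l (F : C -> C) : snd (suml l F) = rsum l (fun c => snd (F c)).
Proof. induction l; simpl; auto. unfold suml in *; simpl. rewrite <- IHl; auto. Qed.
Lemma rsum_ext l f g : (forall x, In x l -> f x = g x) -> rsum l f = rsum l g.
Proof. induction l; simpl; intros H; auto. rewrite H, IHl; auto. Qed.
Lemma rsum_plus l f g : rsum l (fun x => f x + g x) = rsum l f + rsum l g.
Proof. induction l; simpl. ring. rewrite IHl; ring. Qed.
Lemma rsum_minus l f g : rsum l (fun x => f x - g x) = rsum l f - rsum l g.
Proof. induction l; simpl. ring. rewrite IHl; ring. Qed.
Lemma rsum_scal l f k : rsum l (fun x => k * f x) = k * rsum l f.
Proof. induction l; simpl. ring. rewrite IHl; ring. Qed.

Lemma rsum_derive l (A T : C -> R -> R) t :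
  (forall c, In c l -> is_derive (A c) t (T c t)) ->
  is_derive (fun t => rsum l (fun c => A c t)) t (rsum l (fun c => T c t)).
Proof.
  induction l; simpl; intros H.
  - apply (is_derive_const 0).
  - apply (is_derive_plus (A a) (fun t => rsum l (fun c => A c t))). apply H; auto. apply IHl; auto.
Qed.

Lemma rsum_ex_derive l (A : C -> R -> R) t :
  (forall c, In c l -> ex_derive (A c) t) -> ex_derive (fun t => rsum l (fun c => A c t)) t.
Proof.
  induction l; simpl; intros H.
  - apply ex_derive_const.
  - apply (ex_derive_plus (A a) (fun t => rsum l (fun c => A c t))). apply H; auto. apply IHl; auto.
Qed.

Lemma fst_term (r c : C) a t : a - fst c <> 0 ->
  fst (r / ((a, t) - c))%C = Tm (a - fst c) (snd c) (fst r) (snd r) t.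
Proof.
  intros Hx. destruct r as [rho ka], c as [cx cy]. simpl in *.
  unfold Tm. assert (H1 := sq_pos _ Hx). pose proof (Rle_0_sqr (t - cy)); unfold Rsqr in *.
  simpl. field. nra.
Qed.

Lemma atan_split v : v <> 0 -> atan v = (if Rlt_dec 0 v then 1 else -1) * (PI/2) - atan (/v).
Proof.
  intros Hv. destruct (Rlt_dec 0 v).
  - rewrite atan_inv; auto. ring.
  - assert (v < 0) by lra. replace (/ v) with (- / (- v)) by (field; lra).
    rewrite atan_opp, atan_inv by lra. rewrite atan_opp. ring.
Qed.

Definition Phi_t (s x y rho ka w : R) :=
  rho * (s*(PI/2) - atan(x*w/(1 - y*w))) + ka/2 * ln((x^2*w^2 + (1-y*w)^2)/(w^2+1)).

Lemma Phi_t_ex_derive s x y rho ka : ex_derive (Phi_t s x y rho ka) 0.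
Proof.
  unfold Phi_t. auto_derive. repeat split.
  - replace (1 + - (y * 0)) with 1 by ring. lra.
  - replace (0 * (0 * 1) + 1) with 1 by ring. lra.
  - match goal with |- 0 < ?e => replace e with 1 end. lra.
    replace (0 * (0 * 1) + 1) with 1 by ring. replace (1 + - (y * 0)) with 1 by ring. field.
Qed.

Lemma Phi_t_0 s x y rho ka : Phi_t s x y rho ka 0 = rho * s * (PI/2).
Proof.
  unfold Phi_t. replace (x * 0 / (1 - y * 0)) with 0 by (field; lra).
  replace ((x ^ 2 * 0 ^ 2 + (1 - y * 0) ^ 2) / (0 ^ 2 + 1)) with 1 by (field; lra).
  rewrite atan_0, ln_1. ring.
Qed.

Lemma Am_Phi_t x y rho ka t s : x <> 0 -> t <> 0 -> t <> y ->
  s = (if Rlt_dec 0 ((t - y)/x) then 1 else -1) ->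
  Am x y rho ka t = Phi_t s x y rho ka (/t) + ka/2 * ln (1 + t^2).
Proof.
  intros Hx Ht Hty Hs. unfold Am, Phi_t.
  assert (Hv : (t - y) / x <> 0).
  { intro E. apply Hty. apply Rminus_diag_uniq. replace (t - y) with ((t-y)/x * x) by (field; auto).
    rewrite E; ring. }
  rewrite (atan_split _ Hv). rewrite <- Hs.
  replace (/ ((t - y) / x)) with (x * / t / (1 - y * / t)).
  2:{ field. repeat split; auto. intro; apply Hty; lra. }
  assert (Hq : 0 < (x ^ 2 * (/ t) ^ 2 + (1 - y * / t) ^ 2) / ((/ t) ^ 2 + 1)).
  { apply Rdiv_lt_0_compat.
    - assert (0 < x^2 * (/t)^2). { apply Rmult_lt_0_compat. simpl. rewrite Rmult_1_r. apply sq_pos; auto.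
        simpl. rewrite Rmult_1_r. apply sq_pos. apply Rinv_neq_0_compat; auto. }
      assert (0 <= (1 - y * / t) ^ 2) by (apply pow2_ge_0). lra.
    - assert (0 <= (/t)^2) by apply pow2_ge_0. lra. }
  assert (H1t : 0 < 1 + t^2) by (assert (0 <= t^2) by apply pow2_ge_0; lra).
  replace (x ^ 2 + (t - y) ^ 2) with (((x ^ 2 * (/ t) ^ 2 + (1 - y * / t) ^ 2) / ((/ t) ^ 2 + 1)) * (1 + t^2)).
  2:{ field. split; auto. intro E. assert (0 <= t^2) by apply pow2_ge_0.
      assert (E' : t^2 + 1 = 0) by (replace (t^2 + 1) with ((t^2+1)*1) by ring; rewrite <- E at 1; field; auto).
      lra. }
  rewrite ln_mult; auto. ring.
Qed.

Lemma list_bound (l : list C) (g : C -> R) : exists M, 0 < M /\ forall c, In c l -> Rabs (g c) < M.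
Proof.
  induction l. exists 1; split; [lra| simpl; tauto].
  destruct IHl as [M [HM H]]. exists (Rmax M (Rabs (g a) + 1)). split.
  apply Rlt_le_trans with M; auto; apply Rmax_l.
  intros c [<-|Hc]. apply Rlt_le_trans with (Rabs (g a) + 1); [lra|apply Rmax_r].
  apply Rlt_le_trans with M; [auto|apply Rmax_l].
Qed.

Lemma rsum_cont l (g : C -> R -> R) :
  (forall c, In c l -> ex_derive (g c) 0) -> continuity_pt (fun w => rsum l (fun c => g c w)) 0.
Proof.
  intros H. apply continuity_pt_filterlim. assert (Hd := rsum_ex_derive l g 0 H).
  exact (ex_derive_continuous _ _ Hd).
Qed.

Lemma cont_eps (f : R -> R) : continuity_pt f 0 -> forall eps, eps > 0 ->
  exists del, del > 0 /\ forall w, w <> 0 -> Rabs w < del -> Rabs (f w - f 0) < eps.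
Proof.
  intros Hc eps He. destruct (Hc eps He) as [del [Hd H]]. exists del; split; auto.
  intros w Hw Hwd. apply (H w). split. split. exact I. auto.
  simpl. unfold R_dist. rewrite Rminus_0_r; auto.
Qed.




Lemma vert_int_main (a : R) (l : list C) (r : C -> C) :
  (forall c, In c l -> fst c <> a) -> suml l r = 0%C ->
  improper_RInt (fun t => Defs.Re (suml l (fun c => r c / ((a, t) - c)))%C)
    (2 * PI * Defs.Re (suml l (fun c => if Rlt_dec (fst c) a then r c else 0%C))).
Proof.
  intros Hl Hs.
  set (x := fun c : C => a - fst c). set (y := fun c : C => snd c).
  set (rho := fun c => fst (r c)). set (ka := fun c => snd (r c)).
  assert (Hx : forall c, In c l -> x c <> 0). { intros c Hc E. apply (Hl c Hc). unfold x in E; lra. }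
  set (TT := fun t => rsum l (fun c => Tm (x c) (y c) (rho c) (ka c) t)).
  set (AA := fun t => rsum l (fun c => Am (x c) (y c) (rho c) (ka c) t)).
  assert (Ef : (fun t => Defs.Re (suml l (fun c => r c / ((a, t) - c)))%C) = TT).
  { apply functional_extensionality; intros t. unfold Defs.Re. rewrite rsum_fst.
    apply rsum_ext. intros c Hc. apply fst_term. apply Hx; auto. }
  rewrite Ef.
  assert (HD : forall t, is_derive AA t (TT t)).
  { intros t. apply (rsum_derive l (fun c => Am (x c) (y c) (rho c) (ka c)) (fun c => Tm (x c) (y c) (rho c) (ka c))).
    intros c Hc. apply Am_deriv. apply Hx; auto. }
  assert (HC : forall t, continuous TT t).
  { intros t. assert (Hd := rsum_ex_derive l (fun c => Tm (x c) (y c) (rho c) (ka c)) t).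
    refine (ex_derive_continuous _ _ (Hd _)). intros c Hc. apply Tm_ex_derive. apply Hx; auto. }
  assert (HI : forall A B, is_RInt TT A B (AA B - AA A)).
  { intros A B. apply (is_RInt_derive AA TT). intros; apply HD. intros; apply HC. }
  assert (Hsk : rsum l ka = 0). { unfold ka. rewrite <- rsum_snd, Hs. reflexivity. }
  assert (Hsr : rsum l rho = 0). { unfold rho. rewrite <- rsum_fst, Hs. reflexivity. }
  set (sgp := fun c => if Rlt_dec 0 (x c) then 1 else -1).
  set (sgm := fun c => if Rlt_dec 0 (x c) then -1 else 1).
  set (Pp := fun w => rsum l (fun c => Phi_t (sgp c) (x c) (y c) (rho c) (ka c) w)).
  set (Pm := fun w => rsum l (fun c => Phi_t (sgm c) (x c) (y c) (rho c) (ka c) w)).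
  destruct (list_bound l y) as [M [HM HMb]].
  assert (HAp : forall t, t > M -> AA t = Pp (/ t)).
  { intros t Ht. unfold AA, Pp.
    transitivity (rsum l (fun c => Phi_t (sgp c) (x c) (y c) (rho c) (ka c) (/ t) + ka c / 2 * ln (1 + t^2))).
    - apply rsum_ext. intros c Hc. apply Am_Phi_t. apply Hx; auto. lra.
      specialize (HMb c Hc). apply Rabs_def2 in HMb. lra.
      specialize (HMb c Hc). apply Rabs_def2 in HMb. unfold sgp.
      specialize (Hx c Hc).
      destruct (Rlt_dec 0 (x c)); destruct (Rlt_dec 0 ((t - y c) / x c)); auto; exfalso.
      + apply n. apply Rdiv_lt_0_compat; lra.
      + assert (x c < 0) by lra. assert (0 < (t - y c) / (- x c)) by (apply Rdiv_lt_0_compat; lra).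
        replace ((t - y c) / - x c) with (- ((t - y c) / x c)) in H0 by (field; auto). lra.
    - rewrite rsum_plus. 
      rewrite (rsum_ext l (fun c => ka c / 2 * ln (1 + t ^ 2)) (fun c => (/2 * ln (1 + t^2)) * ka c)).
      rewrite rsum_scal, Hsk. ring. intros; unfold Rdiv; ring. }
  assert (HAm : forall t, t < - M -> AA t = Pm (/ t)).
  { intros t Ht. unfold AA, Pm.
    transitivity (rsum l (fun c => Phi_t (sgm c) (x c) (y c) (rho c) (ka c) (/ t) + ka c / 2 * ln (1 + t^2))).
    - apply rsum_ext. intros c Hc. apply Am_Phi_t. apply Hx; auto. lra.
      specialize (HMb c Hc). apply Rabs_def2 in HMb. lra.
      specialize (HMb c Hc). apply Rabs_def2 in HMb. unfold sgm.
      specialize (Hx c Hc).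
      destruct (Rlt_dec 0 (x c)); destruct (Rlt_dec 0 ((t - y c) / x c)); auto; exfalso.
      + assert (0 < (y c - t) / x c) by (apply Rdiv_lt_0_compat; lra).
        replace ((y c - t) / x c) with (- ((t - y c) / x c)) in H by (field; auto). lra.
      + apply n0. assert (x c < 0) by lra.
        replace ((t - y c) / x c) with ((y c - t) / (- x c)) by (field; auto).
        apply Rdiv_lt_0_compat; lra.
    - rewrite rsum_plus. 
      rewrite (rsum_ext l (fun c => ka c / 2 * ln (1 + t ^ 2)) (fun c => (/2 * ln (1 + t^2)) * ka c)).
      rewrite rsum_scal, Hsk. ring. intros; unfold Rdiv; ring. }
  assert (Hval : Pp 0 - Pm 0 = 2 * PI * Defs.Re (suml l (fun c => if Rlt_dec (fst c) a then r c else 0%C))).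
  { unfold Pp, Pm, Defs.Re. rewrite rsum_fst.
    rewrite (rsum_ext l (fun c => Phi_t (sgp c) (x c) (y c) (rho c) (ka c) 0)
      (fun c => rho c * sgp c * (PI / 2))) by (intros; apply Phi_t_0).
    rewrite (rsum_ext l (fun c => Phi_t (sgm c) (x c) (y c) (rho c) (ka c) 0)
      (fun c => rho c * sgm c * (PI / 2))) by (intros; apply Phi_t_0).
    rewrite <- rsum_minus.
    transitivity (rsum l (fun c => (2 * PI) * fst (if Rlt_dec (fst c) a then r c else Complex.RtoC 0) + (- PI) * rho c)).
    - apply rsum_ext. intros c Hc.
      unfold sgp, sgm, x, rho. destruct (Rlt_dec 0 (a - fst c)), (Rlt_dec (fst c) a); simpl; try lra.
    - rewrite rsum_plus, rsum_scal, rsum_scal, Hsr. rewrite Rmult_0_r, Rplus_0_r. reflexivity. }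
  split.
  - intros A B. constructor. apply ex_RInt_Reals_0. eexists; apply HI.
  - intros eps Heps.
    assert (Hcp : continuity_pt Pp 0).
    { apply rsum_cont. intros; apply Phi_t_ex_derive. }
    assert (Hcm : continuity_pt Pm 0).
    { apply rsum_cont. intros; apply Phi_t_ex_derive. }
    destruct (cont_eps Pp Hcp (eps/2)) as [d1 [Hd1 H1]]. lra.
    destruct (cont_eps Pm Hcm (eps/2)) as [d2 [Hd2 H2]]. lra.
    exists (M + 1 + 2 / d1 + 2 / d2). intros A B pr HA HB.
    assert (Hd1' : 0 < 2/d1) by (apply Rdiv_lt_0_compat; lra).
    assert (Hd2' : 0 < 2/d2) by (apply Rdiv_lt_0_compat; lra).
    assert (E : RiemannInt pr = AA B - AA A).
    { rewrite <- RInt_Reals. apply is_RInt_unique. apply HI. }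
    rewrite E, HAp, HAm by lra. rewrite <- Hval.
    assert (HB1 : Rabs (Pp (/ B) - Pp 0) < eps / 2).
    { apply H1. apply Rinv_neq_0_compat; lra. rewrite Rabs_pos_eq.
      apply Rlt_le_trans with (/ (2 / d1)). apply Rinv_lt_contravar. nra. lra.
      replace (/ (2/d1)) with (d1/2) by (field; lra). lra. left; apply Rinv_0_lt_compat; lra. }
    assert (HA1 : Rabs (Pm (/ A) - Pm 0) < eps / 2).
    { apply H2. apply Rinv_neq_0_compat; lra. rewrite Rabs_left.
      rewrite <- Rinv_opp. apply Rlt_le_trans with (/ (2 / d2)). apply Rinv_lt_contravar. nra. lra.
      replace (/ (2/d2)) with (d2/2) by (field; lra). lra. apply Rinv_lt_0_compat; lra. }
    replace (Pp (/ B) - Pm (/ A) - (Pp 0 - Pm 0)) with ((Pp (/ B) - Pp 0) - (Pm (/ A) - Pm 0)) by ring.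
    eapply Rle_lt_trans. apply Rabs_triang. rewrite Rabs_Ropp. lra.
Qed.

End SC.

Section SD.
Open Scope C_scope.

Lemma Ceq (z w : C) : fst z = fst w -> snd z = snd w -> z = w.
Proof. destruct z, w; simpl; intros -> ->; auto. Qed.

Definition CP (n : nat) (f : nat -> C) : C := Cprod1 n f.
Definition CS (n : nat) (f : nat -> C) : C := Csum1 n f.
Lemma E_CP : Cprod1 = CP. Proof. reflexivity. Qed.
Lemma E_CS : Csum1 = CS. Proof. reflexivity. Qed.

Lemma CP_0 f : CP 0 f = 1. Proof. reflexivity. Qed.
Lemma CP_S n f : CP (S n) f = CP n f * f (S n). Proof. reflexivity. Qed.
Lemma CS_0 f : CS 0 f = 0. Proof. reflexivity. Qed.
Lemma CS_S n f : CS (S n) f = CS n f + f (S n). Proof. reflexivity. Qed.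

Lemma CP_ext n f g : (forall k, (1 <= k <= n)%nat -> f k = g k) -> CP n f = CP n g.
Proof.
  induction n; intros H. reflexivity. rewrite !CP_S, IHn, H; auto. lia.
  intros; apply H; lia.
Qed.
Lemma CS_ext n f g : (forall k, (1 <= k <= n)%nat -> f k = g k) -> CS n f = CS n g.
Proof.
  induction n; intros H. reflexivity. rewrite !CS_S, IHn, H; auto. lia.
  intros; apply H; lia.
Qed.
Lemma CP_mult n f g : CP n (fun k => f k * g k) = CP n f * CP n g.
Proof. induction n. rewrite !CP_0; ring. rewrite !CP_S, IHn; ring. Qed.
Lemma CP_neq0 n (f : nat -> C) : (forall k, (1 <= k <= n)%nat -> f k <> 0) -> CP n f <> 0.
Proof.
  induction n; intros H. rewrite CP_0. intro E; inversion E; lra.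
  rewrite CP_S. apply Cmult_neq_0. apply IHn; intros; apply H; lia. apply H; lia.
Qed.
Lemma CP_div n (f g : nat -> C) : (forall k, (1 <= k <= n)%nat -> g k <> 0) ->
  CP n (fun k => f k / g k) = CP n f / CP n g.
Proof.
  induction n; intros H. rewrite !CP_0. field; try (intro E; inversion E; lra).
  rewrite !CP_S, IHn. field. split. apply H; lia. apply CP_neq0; intros; apply H; lia.
  intros; apply H; lia.
Qed.
Lemma CP_one n : CP n (fun _ => 1) = 1.
Proof. induction n. reflexivity. rewrite CP_S, IHn; ring. Qed.
Lemma CS_scal n f c : CS n f * c = CS n (fun k => f k * c).
Proof. induction n. rewrite !CS_0; ring. rewrite !CS_S, <- IHn; ring. Qed.
Lemma CS_opp n f : CS n (fun k => - f k) = - CS n f.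
Proof. induction n. rewrite !CS_0; ring. rewrite !CS_S, IHn; ring. Qed.

Lemma prodl_seq1 n (r : nat -> C) f : prodl (map r (seq 1 n)) f = CP n (fun k => f (r k)).
Proof.
  induction n. reflexivity.
  rewrite seq_S, map_app, prodl_app, IHn, CP_S. simpl map. rewrite prodl_cons, prodl_nil. simpl. ring.
Qed.
Lemma prodl_seq n (r : nat -> C) f : prodl (map r (seq 0 (S n))) f = f (r 0%nat) * CP n (fun k => f (r k)).
Proof. simpl. rewrite <- prodl_seq1. reflexivity. Qed.

Lemma poly_CP n (F : nat -> C -> C) : (forall k, is_poly 1 (F k)) ->
  is_poly n (fun z => CP n (fun k => F k z)).
Proof.
  induction n; intros H. exists 1; intros; reflexivity.
  assert (Hp : is_poly (n + 1) (fun z => CP (S n) (fun k => F k z))).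
  { apply (poly_ext (n + 1) (fun z => CP n (fun k => F k z) * F (S n) z)).
    intros; rewrite CP_S; reflexivity. apply poly_mul; auto. }
  replace (S n) with (n + 1)%nat at 1 by lia. exact Hp.
Qed.
Lemma poly_CS d n (F : nat -> C -> C) : (forall k, is_poly d (F k)) ->
  is_poly d (fun z => CS n (fun k => F k z)).
Proof.
  induction n; intros H. apply (poly_ext d (fun _ => 0)). intros; reflexivity. apply poly_const.
  apply (poly_ext d (fun z => CS n (fun k => F k z) + F (S n) z)).
  intros; rewrite CS_S; reflexivity. apply poly_add; auto.
Qed.

Lemma CP_pick n f k : (1 <= k <= n)%nat ->
  CP n f = f k * CP n (fun j => if Nat.eq_dec j k then 1 else f j).
Proof.
  induction n; intros Hk. lia.
  rewrite !CP_S. destruct (Nat.eq_dec (S n) k).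
  - subst k. rewrite (CP_ext n (fun j => if Nat.eq_dec j (S n) then 1 else f j) f). ring.
    intros j Hj. destruct (Nat.eq_dec j (S n)); auto; lia.
  - rewrite IHn by lia. ring.
Qed.

Lemma poly_sq A B0 Cc : is_poly 2 (fun z => A * z * z + B0 * z + Cc).
Proof.
  exists Cc, (fun z => B0 + z * A). split.
  exists B0, (fun _ => A). split. exists A; auto. auto.
  intros; ring.
Qed.

Lemma NoDup_mapseq n (r : nat -> C) : (forall k l, (k <= n)%nat -> (l <= n)%nat -> r k = r l -> k = l) ->
  NoDup (map r (seq 0 (S n))).
Proof.
  intros H. apply NoDup_map_NoDup_ForallPairs. 2: apply seq_NoDup.
  intros k l Hk Hl E. apply in_seq in Hk, Hl. apply H; auto; lia.
Qed.

Lemma in_mapseq n (r : nat -> C) z : In z (map r (seq 0 (S n))) -> exists k, (k <= n)%nat /\ z = r k.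
Proof. intros H. apply in_map_iff in H. destruct H as [k [<- Hk]]. apply in_seq in Hk. exists k; split; auto; lia. Qed.
Lemma mapseq_in n (r : nat -> C) k : (k <= n)%nat -> In (r k) (map r (seq 0 (S n))).
Proof. intros Hk. apply in_map. apply in_seq. lia. Qed.

End SD.

Notation RC := Complex.RtoC.
Ltac Ceqt := match goal with |- @eq _ ?a ?b => change (@eq C a b) end.

Section SE.
Open Scope C_scope.


Lemma Ci_mul_m (z : C) : Defs.Cmul Defs.Ci (Defs.Cmul (Defs.Copp Defs.Ci) z) = z.
Proof. apply Ceq; destruct z; simpl; ring. Qed.
Lemma Ci_sq_m (z : C) : Defs.Cmul (Defs.Cmul (Defs.Copp Defs.Ci) z) (Defs.Cmul (Defs.Copp Defs.Ci) z) = - (z * z).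
Proof. apply Ceq; destruct z; simpl; ring. Qed.

Definition psiE (X : MEproc) (z : C) : C :=
  RC (sigma X ^ 2 / 2) * z * z + RC (eta X) * z +
  (RC (pp X) * CS (mplus X) (fun k => RC (aplus X k) * (z / (RC (alplus X k) - z))) -
   RC (1 - pp X) * CS (mminus X) (fun j => RC (aminus X j) * (z / (RC (alminus X j) + z)))).

Lemma psiC_eq X z : psiC X z = psiE X z.
Proof.
  unfold psiC, Psi. cbv zeta. rewrite Ci_mul_m, Ci_sq_m. toC. rewrite E_CS.
  unfold psiE. f_equal. f_equal. apply Ceq; destruct z as [u v]; simpl; change R in u, v; field.
Qed.

Definition Dz (X : MEproc) (z : C) : C :=
  CP (mplus X) (fun k => z - RC (alplus X k)) * CP (mminus X) (fun j => z + RC (alminus X j)).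
Definition Dp (X : MEproc) (k : nat) (z : C) : C :=
  CP (mplus X) (fun k' => if Nat.eq_dec k' k then 1 else z - RC (alplus X k')) *
  CP (mminus X) (fun j => z + RC (alminus X j)).
Definition Dm (X : MEproc) (j : nat) (z : C) : C :=
  CP (mplus X) (fun k => z - RC (alplus X k)) *
  CP (mminus X) (fun j' => if Nat.eq_dec j' j then 1 else z + RC (alminus X j')).
Definition PP (X : MEproc) (c : R) (z : C) : C :=
  (RC c - RC (sigma X ^ 2 / 2) * z * z - RC (eta X) * z) * Dz X z
  + RC (pp X) * CS (mplus X) (fun k => RC (aplus X k) * z * Dp X k z)
  + RC (1 - pp X) * CS (mminus X) (fun j => RC (aminus X j) * z * Dm X j z).

Lemma RC_neq (x y : R) : x <> y -> RC x <> RC y.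
Proof. intros H E; apply H; inversion E; auto. Qed.

Lemma Dz_neq0 X z : not_pole X z -> Dz X z <> 0.
Proof.
  intros [H1 H2]. unfold Dz. apply Cmult_neq_0; apply CP_neq0; intros k Hk.
  - apply Csub_neq0. intro E. apply (H1 k Hk). rewrite E. reflexivity.
  - intro E. apply (H2 k Hk). replace z with (z + RC (alminus X k) - RC (alminus X k)) by ring.
    rewrite E. unfold Defs.RtoC. apply Ceq; simpl; ring.
Qed.

Lemma PP_eq X c z : not_pole X z -> PP X c z = (RC c - psiC X z) * Dz X z.
Proof.
  intros Hz. pose proof Hz as [H1 H2]. rewrite psiC_eq. unfold PP, psiE.
  assert (Ep : CS (mplus X) (fun k => RC (aplus X k) * (z / (RC (alplus X k) - z))) * Dz X z
          = - CS (mplus X) (fun k => RC (aplus X k) * z * Dp X k z)).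
  { rewrite CS_scal, <- CS_opp. apply CS_ext. intros k Hk.
    unfold Dz, Dp. rewrite (CP_pick (mplus X) _ k Hk).
    assert (Hk' : RC (alplus X k) - z <> 0).
    { apply Csub_neq0. intro E. apply (H1 k Hk). rewrite <- E. reflexivity. }
    field. auto. }
  assert (Em : CS (mminus X) (fun j => RC (aminus X j) * (z / (RC (alminus X j) + z))) * Dz X z
          = CS (mminus X) (fun j => RC (aminus X j) * z * Dm X j z)).
  { rewrite CS_scal. apply CS_ext. intros j Hj.
    unfold Dz, Dm. rewrite (CP_pick (mminus X) (fun j => z + RC (alminus X j)) j Hj).
    assert (Hj' : RC (alminus X j) + z <> 0).
    { intro E. apply (H2 j Hj). replace z with (RC (alminus X j) + z - RC (alminus X j)) by ring.
      rewrite E. apply Ceq; simpl; ring. }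
    field. auto. }
  transitivity ((RC c - RC (sigma X ^ 2 / 2) * z * z - RC (eta X) * z) * Dz X z
    - RC (pp X) * (CS (mplus X) (fun k => RC (aplus X k) * (z / (RC (alplus X k) - z))) * Dz X z)
    + RC (1 - pp X) * (CS (mminus X) (fun j => RC (aminus X j) * (z / (RC (alminus X j) + z))) * Dz X z)).
  - rewrite Ep, Em. ring.
  - ring.
Qed.



Lemma PP_poly X c : is_poly (mplus X + mminus X + 2) (PP X c).
Proof.
  assert (HD : is_poly (mplus X + mminus X) (Dz X)).
  { apply poly_mul; apply poly_CP; intros k.
    - apply (poly_ext 1 (fun z => 1 * z + - RC (alplus X k))). intros; ring. apply poly_lin.
    - apply (poly_ext 1 (fun z => 1 * z + RC (alminus X k))). intros; ring. apply poly_lin. }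
  assert (HDp : forall k, is_poly (mplus X + mminus X) (Dp X k)).
  { intros k0. apply poly_mul; apply poly_CP; intros k.
    - destruct (Nat.eq_dec k k0). apply poly_const.
      apply (poly_ext 1 (fun z => 1 * z + - RC (alplus X k))). intros; ring. apply poly_lin.
    - apply (poly_ext 1 (fun z => 1 * z + RC (alminus X k))). intros; ring. apply poly_lin. }
  assert (HDm : forall k, is_poly (mplus X + mminus X) (Dm X k)).
  { intros k0. apply poly_mul; apply poly_CP; intros k.
    - apply (poly_ext 1 (fun z => 1 * z + - RC (alplus X k))). intros; ring. apply poly_lin.
    - destruct (Nat.eq_dec k k0). apply poly_const.
      apply (poly_ext 1 (fun z => 1 * z + RC (alminus X k))). intros; ring. apply poly_lin. }
  unfold PP. apply poly_add. apply poly_add.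
  - replace (mplus X + mminus X + 2)%nat with (2 + (mplus X + mminus X))%nat by lia.
    apply poly_mul; auto.
    apply (poly_ext 2 (fun z => (- RC (sigma X ^ 2 / 2)) * z * z + (- RC (eta X)) * z + RC c)).
    intros; ring. apply poly_sq.
  - apply poly_scal. apply poly_CS. intros k.
    apply (poly_ext _ (fun z => RC (aplus X k) * (z * Dp X k z))). intros; ring.
    apply poly_scal. apply (poly_le (S (mplus X + mminus X))). lia. apply poly_mulX; auto.
  - apply poly_scal. apply poly_CS. intros k.
    apply (poly_ext _ (fun z => RC (aminus X k) * (z * Dm X k z))). intros; ring.
    apply poly_scal. apply (poly_le (S (mplus X + mminus X))). lia. apply poly_mulX; auto.
Qed.

Definition Mp (X : MEproc) (r : nat -> C) : C := - r 0%nat * CP (mplus X) (fun k => r k / RC (alplus X k)).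
Definition Mm (X : MEproc) (r : nat -> C) : C := - r 0%nat * CP (mminus X) (fun k => - r k / RC (alminus X k)).
Definition Mmu (X : MEproc) (phib : R) (r : nat -> C) : C :=
  RC phib * r 0%nat * CP (mplus X) (fun k => r k / RC (alplus X k)).

Lemma RC_pos_neq0 x : x > 0 -> RC x <> 0.
Proof. intros H E. inversion E. lra. Qed.

Lemma Psi_plus_form X (r : nat -> C) (u : C) :
  (forall k, (k <= mplus X)%nat -> r k <> 0) ->
  (forall k, (1 <= k <= mplus X)%nat -> alplus X k > 0) ->
  (forall k, (k <= mplus X)%nat -> u <> r k) ->
  Psi_plus X r (Defs.Cmul (Defs.Copp Defs.Ci) u) =
  Mp X r * CP (mplus X) (fun k => u - RC (alplus X k)) / prodl (map r (seq 0 (S (mplus X)))) (fun c => u - c).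
Proof.
  intros Hr Ha Hu. unfold Psi_plus. cbv zeta. rewrite Ci_mul_m. toC. rewrite E_CP.
  rewrite prodl_seq. unfold Mp.
  rewrite (CP_ext (mplus X) _ (fun k => (r k / RC (alplus X k)) * ((u - RC (alplus X k)) / (u - r k)))).
  2:{ intros k Hk. assert (H1 := Hr k ltac:(lia)). assert (H2 := RC_pos_neq0 _ (Ha k Hk)).
      assert (H3 : u - r k <> 0) by (apply Csub_neq0; apply Hu; lia).
      assert (H4 : 1 - u / r k <> 0).
      { intro E. apply H3. replace (u - r k) with (- r k * (1 - u / r k)) by (field; auto). rewrite E; ring. }
      Ceqt. field. repeat split; auto. apply Csub_neq0. intro E. apply (Hu k). lia. auto. }
  rewrite CP_mult, (CP_div (mplus X) (fun k => u - RC (alplus X k)) (fun k => u - r k)).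
  2:{ intros k Hk. apply Csub_neq0; apply Hu; lia. }
  assert (H0 := Hr 0%nat ltac:(lia)). assert (H3 : u - r 0%nat <> 0) by (apply Csub_neq0; apply Hu; lia).
  assert (H5 : CP (mplus X) (fun k => u - r k) <> 0).
  { apply CP_neq0. intros k Hk. apply Csub_neq0; apply Hu; lia. }
  Ceqt. field. repeat split; auto. apply Csub_neq0. intro E. apply (Hu 0%nat). lia. auto.
Qed.



Lemma Psi_minus_form X (r : nat -> C) (u : C) :
  (forall k, (k <= mminus X)%nat -> r k <> 0) ->
  (forall k, (1 <= k <= mminus X)%nat -> alminus X k > 0) ->
  (forall k, (k <= mminus X)%nat -> u <> r k) ->
  Psi_minus X r (Defs.Cmul (Defs.Copp Defs.Ci) u) =
  Mm X r * CP (mminus X) (fun k => u + RC (alminus X k)) / prodl (map r (seq 0 (S (mminus X)))) (fun c => u - c).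
Proof.
  intros Hr Ha Hu. unfold Psi_minus. cbv zeta. rewrite Ci_mul_m. toC. rewrite E_CP.
  rewrite prodl_seq. unfold Mm.
  rewrite (CP_ext (mminus X) _ (fun k => (- r k / RC (alminus X k)) * ((u + RC (alminus X k)) / (u - r k)))).
  2:{ intros k Hk. assert (H1 := Hr k ltac:(lia)). assert (H2 := RC_pos_neq0 _ (Ha k Hk)).
      assert (H3 : u - r k <> 0) by (apply Csub_neq0; apply Hu; lia).
      Ceqt. field. repeat split; auto. apply Csub_neq0. intro E. apply (Hu k). lia. auto. }
  rewrite CP_mult, (CP_div (mminus X) (fun k => u + RC (alminus X k)) (fun k => u - r k)).
  2:{ intros k Hk. apply Csub_neq0; apply Hu; lia. }
  assert (H0 := Hr 0%nat ltac:(lia)). assert (H3 : u - r 0%nat <> 0) by (apply Csub_neq0; apply Hu; lia).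
  assert (H5 : CP (mminus X) (fun k => u - r k) <> 0).
  { apply CP_neq0. intros k Hk. apply Csub_neq0; apply Hu; lia. }
  Ceqt. field. repeat split; auto. apply Csub_neq0. intro E. apply (Hu 0%nat). lia. auto.
Qed.

Lemma mu_hat_form X (phib : R) (r : nat -> C) (u : C) :
  phib > 0 -> u <> RC phib ->
  (forall k, (k <= mplus X)%nat -> r k <> 0) ->
  (forall k, (1 <= k <= mplus X)%nat -> alplus X k > 0) ->
  (forall k, (k <= mplus X)%nat -> u <> r k) ->
  mu_hat X phib r (Defs.Copp u) =
  Mmu X phib r * CP (mplus X) (fun k => u - RC (alplus X k)) /
    ((u - RC phib) * prodl (map r (seq 0 (S (mplus X)))) (fun c => u - c)).
Proof.
  intros Hp Hup Hr Ha Hu. unfold mu_hat. toC. rewrite E_CP.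
  rewrite prodl_seq. unfold Mmu.
  rewrite (CP_ext (mplus X) _ (fun k => (r k / RC (alplus X k)) * ((u - RC (alplus X k)) / (u - r k)))).
  2:{ intros k Hk. assert (H1 := Hr k ltac:(lia)). assert (H2 := RC_pos_neq0 _ (Ha k Hk)).
      assert (H3 : u - r k <> 0) by (apply Csub_neq0; apply Hu; lia).
      Ceqt. field. repeat split; auto. apply Csub_neq0. intro E. apply (Hu k). lia. auto. }
  rewrite CP_mult, (CP_div (mplus X) (fun k => u - RC (alplus X k)) (fun k => u - r k)).
  2:{ intros k Hk. apply Csub_neq0; apply Hu; lia. }
  assert (H0 := Hr 0%nat ltac:(lia)). assert (H3 : u - r 0%nat <> 0) by (apply Csub_neq0; apply Hu; lia).
  assert (H5 : CP (mplus X) (fun k => u - r k) <> 0).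
  { apply CP_neq0. intros k Hk. apply Csub_neq0; apply Hu; lia. }
  assert (H6 : u - RC phib <> 0) by (apply Csub_neq0; auto).
  assert (H7 := RC_pos_neq0 _ Hp).
  Ceqt. field. repeat split; auto.
  - apply Csub_neq0. intro E. apply (Hu 0%nat). lia. auto.
  - apply Csub_neq0. intro E. apply Hup. auto.
Qed.

Lemma CS_zero n : CS n (fun _ => 0) = 0.
Proof. induction n. reflexivity. rewrite CS_S, IHn; ring. Qed.

Lemma psiC_0 X : (forall k, (1 <= k <= mplus X)%nat -> alplus X k > 0) ->
  (forall k, (1 <= k <= mminus X)%nat -> alminus X k > 0) -> psiC X (RC 0) = RC 0.
Proof.
  intros Ha Hb. rewrite psiC_eq. unfold psiE.
  rewrite (CS_ext _ _ (fun _ => 0)), (CS_ext (mminus X) _ (fun _ => 0)), !CS_zero.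
  Ceqt. ring.
  - intros k Hk. assert (H := RC_pos_neq0 _ (Hb k Hk)). Ceqt. field.
    replace (RC (alminus X k) + RC 0) with (RC (alminus X k)) by ring. auto.
  - intros k Hk. assert (H := RC_pos_neq0 _ (Ha k Hk)). Ceqt. field.
    replace (RC (alplus X k) - RC 0) with (RC (alplus X k)) by ring. auto.
Qed.

Lemma Psi_plus_0 X (r : nat -> C) : (forall k, (k <= mplus X)%nat -> r k <> 0) ->
  (forall k, (1 <= k <= mplus X)%nat -> alplus X k > 0) ->
  Psi_plus X r (Defs.Cmul (Defs.Copp Defs.Ci) (RC 0)) = RC 1.
Proof.
  intros Hr Ha. unfold Psi_plus. cbv zeta. rewrite Ci_mul_m. toC. rewrite E_CP.
  rewrite (CP_ext _ _ (fun _ => 1)), CP_one.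
  - assert (H0 := Hr 0%nat ltac:(lia)). Ceqt. field.
    replace (r 0%nat - RC 0) with (r 0%nat) by ring. auto.
  - intros k Hk. assert (H1 := Hr k ltac:(lia)). assert (H2 := RC_pos_neq0 _ (Ha k Hk)).
    Ceqt. field. repeat split; auto.
Qed.

Lemma Psi_minus_0 X (r : nat -> C) : (forall k, (k <= mminus X)%nat -> r k <> 0) ->
  (forall k, (1 <= k <= mminus X)%nat -> alminus X k > 0) ->
  Psi_minus X r (Defs.Cmul (Defs.Copp Defs.Ci) (RC 0)) = RC 1.
Proof.
  intros Hr Ha. unfold Psi_minus. cbv zeta. rewrite Ci_mul_m. toC. rewrite E_CP.
  rewrite (CP_ext _ _ (fun _ => 1)), CP_one.
  - assert (H0 := Hr 0%nat ltac:(lia)). Ceqt. field.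
    replace (r 0%nat - RC 0) with (r 0%nat) by ring. auto.
  - intros k Hk. assert (H1 := Hr k ltac:(lia)). assert (H2 := RC_pos_neq0 _ (Ha k Hk)).
    Ceqt. field. repeat split; auto.
Qed.

End SE.

Section SF.
Open Scope C_scope.

Lemma K_form X (rp rm : nat -> C) (u : C) :
  (forall k, (k <= mplus X)%nat -> rp k <> 0) ->
  (forall k, (k <= mminus X)%nat -> rm k <> 0) ->
  (forall k, (1 <= k <= mplus X)%nat -> alplus X k > 0) ->
  (forall k, (1 <= k <= mminus X)%nat -> alminus X k > 0) ->
  ~ In u (map rp (seq 0 (S (mplus X))) ++ map rm (seq 0 (S (mminus X)))) ->
  Psi_plus X rp (Defs.Cmul (Defs.Copp Defs.Ci) u) * Psi_minus X rm (Defs.Cmul (Defs.Copp Defs.Ci) u)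
  = Mp X rp * Mm X rm * Dz X u / prodl (map rp (seq 0 (S (mplus X))) ++ map rm (seq 0 (S (mminus X)))) (fun c => u - c).
Proof.
  intros Hrp Hrm Ha Hb Hu.
  assert (Hup : forall k, (k <= mplus X)%nat -> u <> rp k).
  { intros k Hk E. apply Hu. apply in_or_app; left. rewrite E. apply mapseq_in; auto. }
  assert (Hum : forall k, (k <= mminus X)%nat -> u <> rm k).
  { intros k Hk E. apply Hu. apply in_or_app; right. rewrite E. apply mapseq_in; auto. }
  rewrite Psi_plus_form, Psi_minus_form; auto. rewrite prodl_app. unfold Dz.
  assert (H1 : prodl (map rp (seq 0 (S (mplus X)))) (fun c => u - c) <> 0).
  { apply prodl_neq0. intros x Hx. apply Csub_neq0. intro E; subst. apply Hu; apply in_or_app; auto. }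
  assert (H2 : prodl (map rm (seq 0 (S (mminus X)))) (fun c => u - c) <> 0).
  { apply prodl_neq0. intros x Hx. apply Csub_neq0. intro E; subst. apply Hu; apply in_or_app; auto. }
  Ceqt. field. auto.
Qed.

Lemma WH X q lam (rqp rqm : nat -> C) (c : C) :
  ME_valid X -> q > 0 -> lam > 0 ->
  root_enum X (Defs.RtoC q) (fun z => Re z > 0) (mplus X) rqp ->
  root_enum X (Defs.RtoC q) (fun z => Re z < 0) (mminus X) rqm ->
  is_root X (Defs.RtoC (-lam)) c ->
  Psi_plus X rqp (Defs.Cmul (Defs.Copp Defs.Ci) c) * Psi_minus X rqm (Defs.Cmul (Defs.Copp Defs.Ci) c)
  = RC (q / (q + lam)).
Proof.
  intros HV Hq Hl [Hp1 [Hp2 Hp3]] [Hm1 [Hm2 Hm3]] [Hcnp Hcpsi].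
  destruct HV as [Hsig [Hpp [Ha [Hb _]]]].
  assert (Hrp : forall k, (k <= mplus X)%nat -> rqp k <> 0).
  { intros k Hk E. destruct (Hp1 k Hk) as [_ H]. rewrite E in H. simpl in H. lra. }
  assert (Hrm : forall k, (k <= mminus X)%nat -> rqm k <> 0).
  { intros k Hk E. destruct (Hm1 k Hk) as [_ H]. rewrite E in H. simpl in H. lra. }
  set (Rq := map rqp (seq 0 (S (mplus X))) ++ map rqm (seq 0 (S (mminus X)))).
  assert (HnRq : NoDup Rq).
  { apply NoDup_app. apply NoDup_mapseq; auto. apply NoDup_mapseq; auto.
    intros z Hz1 Hz2. apply in_mapseq in Hz1, Hz2. destruct Hz1 as [k1 [Hk1 ->]], Hz2 as [k2 [Hk2 E]].
    destruct (Hp1 k1 Hk1) as [_ H1]. destruct (Hm1 k2 Hk2) as [_ H2]. rewrite E in H1. lra. }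
  assert (HlRq : length Rq = (mplus X + mminus X + 2)%nat).
  { unfold Rq. rewrite length_app, !length_map, !length_seq. lia. }
  assert (Hroots : forall r, In r Rq -> PP X q r = 0).
  { intros r Hr. apply in_app_or in Hr. destruct Hr as [Hr|Hr]; apply in_mapseq in Hr;
      destruct Hr as [k [Hk ->]].
    - destruct (Hp1 k Hk) as [[Hnp Hps] _]. rewrite PP_eq; auto. rewrite Hps. toC. ring.
    - destruct (Hm1 k Hk) as [[Hnp Hps] _]. rewrite PP_eq; auto. rewrite Hps. toC. ring. }
  destruct (poly_roots_prod Rq _ (PP X q) (PP_poly X q) HnRq HlRq Hroots) as [kk Hkk].
  assert (HPc : PP X q c = RC (q + lam) * Dz X c).
  { rewrite PP_eq; auto. rewrite Hcpsi. toC. f_equal. apply Ceq; simpl; ring. }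
  assert (HDc : Dz X c <> 0) by (apply Dz_neq0; auto).
  assert (Hnp0 : not_pole X (RC 0)).
  { split; intros k Hk E; inversion E. specialize (Ha k Hk); lra. specialize (Hb k Hk); lra. }
  assert (HD0 : Dz X (RC 0) <> 0) by (apply Dz_neq0; auto).
  assert (Hql : RC (q + lam) <> 0) by (apply RC_pos_neq0; lra).
  assert (Hcn : ~ In c Rq).
  { intros Hin. apply Hroots in Hin. rewrite HPc in Hin. apply (Cmult_neq_0 _ _ Hql HDc). auto. }
  assert (H0n : ~ In (RC 0) Rq).
  { intros Hin. apply in_app_or in Hin. destruct Hin as [Hr|Hr]; apply in_mapseq in Hr;
      destruct Hr as [k [Hk E]].
    - destruct (Hp1 k Hk) as [_ H]. rewrite <- E in H. simpl in H. lra.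
    - destruct (Hm1 k Hk) as [_ H]. rewrite <- E in H. simpl in H. lra. }
  assert (HK0 := K_form X rqp rqm (RC 0) Hrp Hrm Ha Hb H0n).
  rewrite Psi_plus_0, Psi_minus_0 in HK0; auto.
  rewrite (K_form X rqp rqm c Hrp Hrm Ha Hb Hcn). fold Rq. fold Rq in HK0.
  assert (HA0 : prodl Rq (fun z => RC 0 - z) <> 0).
  { apply prodl_neq0. intros x Hx. apply Csub_neq0. intro E; subst. auto. }
  assert (HAc : prodl Rq (fun z => c - z) <> 0).
  { apply prodl_neq0. intros x Hx. apply Csub_neq0. intro E; subst. auto. }
  assert (HP0 : PP X q (RC 0) = RC q * Dz X (RC 0)).
  { rewrite PP_eq; auto. rewrite psiC_0; auto. Ceqt. ring. }
  rewrite Hkk in HP0, HPc.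
  assert (HM : Mp X rqp * Mm X rqm = prodl Rq (fun z => RC 0 - z) / Dz X (RC 0)).
  { replace (Mp X rqp * Mm X rqm) with (Mp X rqp * Mm X rqm * Dz X (RC 0) / prodl Rq (fun z => RC 0 - z)
       * prodl Rq (fun z => RC 0 - z) / Dz X (RC 0)) by (field; auto).
    rewrite <- HK0. field. auto. }
  rewrite HM.
  assert (Hk : kk = RC q * Dz X (RC 0) / prodl Rq (fun z => RC 0 - z)).
  { rewrite <- HP0. field. auto. }
  assert (Hq0 : RC q <> 0) by (apply RC_pos_neq0; lra).
  assert (HAc' : prodl Rq (fun z => c - z) = RC (q + lam) * Dz X c / kk).
  { assert (Hkk0 : kk <> 0).
    { intro E. rewrite E in HPc. apply (Cmult_neq_0 _ _ Hql HDc). rewrite <- HPc. ring. }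
    rewrite <- HPc. field. auto. }
  rewrite HAc', Hk. rewrite RtoC_div by lra. Ceqt. field. repeat split; auto.
Qed.

End SF.

Section SG.
Open Scope C_scope.

Lemma CS_snd0 n (f : nat -> C) : (forall k, (1 <= k <= n)%nat -> snd (f k) = 0%R) -> snd (CS n f) = 0%R.
Proof.
  induction n; intros H. reflexivity. rewrite CS_S. simpl. rewrite (H (S n)) by lia. rewrite IHn. ring.
  intros; apply H; lia.
Qed.

Lemma snd_RC_div (a x y : R) : y <> 0%R -> snd (RC a * (RC x / RC y)) = 0%R.
Proof. intros H. rewrite <- RtoC_div, <- RtoC_mult by auto. reflexivity. Qed.

Lemma is_root_real X (x lam : R) : psi_dom X x -> psi X x = (- lam)%R -> is_root X (Defs.RtoC (- lam)%R) (Defs.RtoC x).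
Proof.
  intros [Ha Hb] Hpsi. split.
  - split; intros k Hk E; inversion E. specialize (Ha k Hk); lra. specialize (Hb k Hk); lra.
  - apply Ceq. simpl. unfold psi in Hpsi. exact Hpsi.
    change (snd (psiC X (Defs.RtoC x)) = 0%R). rewrite psiC_eq. unfold psiE.
    unfold Cminus, Cplus, Cmult, Complex.Copp, Complex.RtoC; cbn [fst snd].
    rewrite (CS_snd0 (mplus X)), (CS_snd0 (mminus X)).
    + unfold Defs.RtoC; simpl. ring.
    + intros k Hk. specialize (Hb k Hk). simpl. field.
      replace (alminus X k + x)%R with (x - - alminus X k)%R by ring. intro E. 
      assert (E' : (x - - alminus X k)%R = 0%R) by nra. lra.
    + intros k Hk. specialize (Ha k Hk). simpl. field.
      intro E. assert (E' : (alplus X k + - x)%R = 0%R) by nra. lra.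
Qed.

Lemma Pi'_app l1 l2 c : Pi' (l1 ++ l2) c = Pi' l1 c * Pi' l2 c.
Proof. unfold Pi'. apply prodl_app. Qed.
Lemma Pi'_notin l c : ~ In c l -> Pi' l c = prodl l (fun x => c - x).
Proof.
  intros H. unfold Pi'. apply prodl_ext. intros x Hx. destruct (Ceq_dec x c); auto.
  subst; contradiction.
Qed.
Lemma fst_neq0 (z : C) : fst z <> 0%R -> z <> 0.
Proof. intros H E. apply H. rewrite E. reflexivity. Qed.
Lemma Csub_neq0_fst (z w : C) : fst z <> fst w -> z - w <> 0.
Proof. intros H. apply Csub_neq0. intro E. apply H. rewrite E. reflexivity. Qed.

End SG.

Section SH.

Lemma residue_sum X (phib q lam th a : R) (rqp rqm rlp : nat -> C) :
  ME_valid X -> q > 0 -> th > 0 -> 0 < lam -> 0 < a -> a < phib ->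
  psi_dom X phib -> psi X phib = - lam ->
  root_enum X (RtoC q) (fun z => Re z > 0) (mplus X) rqp ->
  root_enum X (RtoC q) (fun z => Re z < 0) (mminus X) rqm ->
  root_enum X (RtoC (- lam)) (fun z => Re z > phib) (mplus X) rlp ->
  let SS := (RtoC phib :: map rlp (seq 0 (S (mplus X)))) ++ (RtoC (- th) :: map rqm (seq 0 (S (mminus X)))) in
  NoDup SS ->
  let Phi := fun u => (Psi_plus X rqp (Cmul Ci (RtoC th)) * Mmu X phib rlp * Mm X rqm * Dz X u)%C in
  suml SS (fun c => if Rlt_dec (fst c) a then (Phi c / Pi' SS c)%C else Complex.RtoC 0)
  = (RC (q / (q + lam)) * mu_hat X phib rlp (RtoC th))%C.
Proof.
  intros HV Hq Hth Hlam Ha0 Hab Hpd Hpp Hrqp Hrqm Hrlp SS HNS Phi.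
  Local Open Scope C_scope.
  pose proof HV as [Hsig [Hppr [Hal [Hbe _]]]].
  pose proof Hrqp as [Hp1 [Hp2 Hp3]]. pose proof Hrqm as [Hm1 [Hm2 Hm3]]. pose proof Hrlp as [Hl1 [Hl2 Hl3]].
  assert (Hphp : (phib > 0)%R) by lra.
  set (Rl := map rlp (seq 0 (S (mplus X)))). set (Rm := map rqm (seq 0 (S (mminus X)))).
  set (Rp := map rqp (seq 0 (S (mplus X)))).
  set (SR := RC phib :: Rl). set (SL := RC (- th) :: Rm).
  assert (ES : SS = SR ++ SL) by reflexivity.
  assert (Hrpre : forall k, (k <= mplus X)%nat -> (fst (rqp k) > 0)%R) by (intros k Hk; apply (Hp1 k Hk)).
  assert (Hrmre : forall k, (k <= mminus X)%nat -> (fst (rqm k) < 0)%R) by (intros k Hk; apply (Hm1 k Hk)).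
  assert (Hrlre : forall k, (k <= mplus X)%nat -> (fst (rlp k) > phib)%R) by (intros k Hk; apply (Hl1 k Hk)).
  assert (Hrpnz : forall k, (k <= mplus X)%nat -> rqp k <> 0) by (intros k Hk; apply fst_neq0; specialize (Hrpre k Hk); lra).
  assert (Hrmnz : forall k, (k <= mminus X)%nat -> rqm k <> 0) by (intros k Hk; apply fst_neq0; specialize (Hrmre k Hk); lra).
  assert (Hrlnz : forall k, (k <= mplus X)%nat -> rlp k <> 0) by (intros k Hk; apply fst_neq0; specialize (Hrlre k Hk); lra).
  assert (HSR : forall c, In c SR -> (fst c > a)%R).
  { intros c [<-|Hc]. simpl; lra. apply in_mapseq in Hc. destruct Hc as [k [Hk ->]]. specialize (Hrlre k Hk); lra. }
  assert (HSL : forall c, In c SL -> (fst c < a)%R).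
  { intros c [<-|Hc]. simpl; lra. apply in_mapseq in Hc. destruct Hc as [k [Hk ->]]. specialize (Hrmre k Hk); lra. }
  assert (E1 : suml SS (fun c => if Rlt_dec (fst c) a then Phi c / Pi' SS c else Complex.RtoC 0)
               = suml SL (fun c => Phi c / Pi' SS c)).
  { rewrite ES, suml_app. rewrite (suml_ext SR _ (fun _ => 0)), suml_zero.
    rewrite Cplus_0_l. apply suml_ext. intros c Hc. destruct (Rlt_dec (fst c) a); auto.
    specialize (HSL c Hc); lra.
    intros c Hc. destruct (Rlt_dec (fst c) a); auto. specialize (HSR c Hc); lra. }
  assert (HlenS : @length C SS = (mplus X + mminus X + 4)%nat).
  { unfold SS. rewrite length_app. simpl. rewrite !length_map, !length_seq. lia. }
  clearbody SS.
  assert (HDz : is_poly (mplus X + mminus X) (Dz X)).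
  { apply poly_mul; apply poly_CP; intros k.
    - apply (poly_ext 1 (fun z => 1 * z + - RC (alplus X k))). intros; ring. apply poly_lin.
    - apply (poly_ext 1 (fun z => 1 * z + RC (alminus X k))). intros; ring. apply poly_lin. }
  assert (HPhi : forall d, (mplus X + mminus X <= d)%nat -> is_poly d Phi).
  { intros d Hd. apply (poly_le (mplus X + mminus X)); auto. unfold Phi. apply poly_scal; auto. }
  assert (E2 : suml SS (fun c => Phi c / Pi' SS c) = 0).
  { apply PF_sum0. exact HNS. rewrite HlenS; lia. apply HPhi. rewrite HlenS; lia. }
  assert (ESS : forall f, suml SS f = suml SR f + suml SL f) by (intros; rewrite ES; apply suml_app).
  set (SH := SR ++ RC (- th) :: nil).
  set (C0 := Psi_plus X rqp (Cmul Ci (RtoC th))).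
  set (h := fun u => C0 * Mmu X phib rlp / Mp X rqp * prodl Rp (fun z => u - z)).
  assert (HMp : Mp X rqp <> 0).
  { unfold Mp. apply Cmult_neq_0. intro E. apply (Hrpnz 0%nat). lia.
    replace (rqp 0%nat) with (- - rqp 0%nat) by ring. rewrite E; ring.
    apply CP_neq0. intros k Hk. assert (H1 := Hrpnz k ltac:(lia)). assert (H2 := RC_pos_neq0 _ (Hal k Hk)).
    intro E. apply H1. replace (rqp k) with (rqp k / RC (alplus X k) * RC (alplus X k)) by (field; auto).
    rewrite E; ring. }
  assert (E3 : forall c, In c SR -> Phi c / Pi' SS c = RC (q / (q + lam)) * (h c / Pi' SH c)).
  { intros c Hc.
    assert (Hroot : is_root X (RtoC (- lam)) c).
    { destruct Hc as [<-|Hc]. apply is_root_real; auto.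
      apply in_mapseq in Hc. destruct Hc as [k [Hk ->]]. apply (Hl1 k Hk). }
    assert (Hcn : ~ In c (Rp ++ Rm)).
    { intro Hin. apply in_app_or in Hin. destruct Hroot as [_ Hps].
      destruct Hin as [Hin|Hin]; apply in_mapseq in Hin; destruct Hin as [k [Hk ->]].
      - destruct (Hp1 k Hk) as [[_ Hps'] _]. rewrite Hps' in Hps. inversion Hps. lra.
      - destruct (Hm1 k Hk) as [[_ Hps'] _]. rewrite Hps' in Hps. inversion Hps. lra. }
    assert (HK := WH X q lam rqp rqm c HV Hq Hlam Hrqp Hrqm Hroot).
    rewrite (K_form X rqp rqm c Hrpnz Hrmnz Hal Hbe Hcn) in HK.
    rewrite prodl_app in HK.
    assert (HcSL : ~ In c SL). { intro H. specialize (HSL c H). specialize (HSR c Hc). lra. }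
    assert (Hc0 : c - RC (- th) <> 0).
    { apply Csub_neq0_fst. specialize (HSR c Hc). simpl. lra. }
    assert (HnRp : prodl Rp (fun z => c - z) <> 0).
    { apply prodl_neq0. intros x Hx. apply Csub_neq0. intro E; subst. apply Hcn. apply in_or_app; auto. }
    assert (HnRm : prodl Rm (fun z => c - z) <> 0).
    { apply prodl_neq0. intros x Hx. apply Csub_neq0. intro E; subst. apply Hcn. apply in_or_app; auto. }
    assert (HPi := Pi'_neq0 SR c).
    rewrite ES, Pi'_app, (Pi'_notin SL c HcSL).
    unfold SH. rewrite Pi'_app, (Pi'_notin (RC (- th) :: nil) c).
    2:{ intros [E|[]]. apply HcSL. left. auto. }
    unfold SL. rewrite !prodl_cons, prodl_nil. rewrite <- HK.
    unfold Phi, h, C0. fold Rp Rm. Ceqt. field. repeat split; auto. }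
  set (x := RC (- th)).
  assert (HxSR : ~ In x SR). { intro H. specialize (HSR x H). simpl in HSR. lra. }
  assert (HNSR : NoDup SR). { rewrite ES in HNS. apply NoDup_app_remove_r in HNS. exact HNS. }
  assert (HNSH : NoDup SH).
  { unfold SH. apply NoDup_app; auto. constructor. simpl; tauto. constructor.
    intros z Hz [E|[]]. subst. auto. }
  assert (HlenSH : @length C SH = (mplus X + 3)%nat).
  { unfold SH, SR, Rl. rewrite length_app. simpl. rewrite length_map, length_seq. lia. }
  assert (Hh : is_poly (length SH - 2) h).
  { rewrite HlenSH. replace (mplus X + 3 - 2)%nat with (length Rp).
    unfold h. apply poly_scal. apply poly_prodl. unfold Rp. rewrite length_map, length_seq. lia. }
  assert (E4 := PF_sum0 SH h HNSH ltac:(rewrite HlenSH; lia) Hh).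
  assert (HPiSH : Pi' SH x = prodl SR (fun z => x - z)).
  { unfold SH. rewrite Pi'_app, (Pi'_notin SR x HxSR). unfold Pi'. rewrite prodl_cons, prodl_nil.
    destruct (Ceq_dec (RC (- th)) x) as [_|n]; [ring|exfalso; apply n; reflexivity]. }
  assert (E4' : suml SR (fun c => h c / Pi' SH c) + h x / Pi' SH x = 0).
  { rewrite <- E4. unfold SH. rewrite suml_app, suml_cons, suml_nil. unfold x. Ceqt. ring. }
  rewrite HPiSH in E4'.
  assert (E5 : h x / prodl SR (fun z => x - z) = mu_hat X phib rlp (RtoC th)).
  { assert (Eth : RtoC th = Defs.Copp x) by (apply Ceq; simpl; ring).
    assert (Eci : Cmul Ci (RtoC th) = Cmul (Defs.Copp Ci) x) by (apply Ceq; simpl; ring).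
    assert (Hxp : forall k, (k <= mplus X)%nat -> x <> rqp k).
    { intros k Hk E. specialize (Hrpre k Hk). rewrite <- E in Hrpre. simpl in Hrpre. lra. }
    assert (Hxl : forall k, (k <= mplus X)%nat -> x <> rlp k).
    { intros k Hk E. specialize (Hrlre k Hk). rewrite <- E in Hrlre. simpl in Hrlre. lra. }
    assert (Hxph : x <> RC phib). { intro E. inversion E. lra. }
    rewrite Eth, mu_hat_form; auto.
    unfold h, C0. rewrite Eci, Psi_plus_form; auto.
    assert (HnRp : prodl Rp (fun z => x - z) <> 0).
    { apply prodl_neq0. intros z Hz. apply Csub_neq0. intro E; subst z.
      apply in_mapseq in Hz. destruct Hz as [k [Hk E]]. apply (Hxp k Hk); auto. }
    assert (HnRl : prodl Rl (fun z => x - z) <> 0).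
    { apply prodl_neq0. intros z Hz. apply Csub_neq0. intro E; subst z.
      apply in_mapseq in Hz. destruct Hz as [k [Hk E]]. apply (Hxl k Hk); auto. }
    assert (Hxp0 : x - RC phib <> 0) by (apply Csub_neq0; auto).
    unfold SR. rewrite prodl_cons. fold Rp Rl. Ceqt. field. repeat split; auto. }
  rewrite E1. rewrite ESS in E2.
  rewrite (suml_ext SR _ (fun c => RC (q / (q + lam)) * (h c / Pi' SH c))) in E2 by exact E3.
  replace (suml SL (fun c => Phi c / Pi' SS c)) with
    (- suml SR (fun c => RC (q / (q + lam)) * (h c / Pi' SH c))).
  2:{ match goal with |- ?A = ?B => replace B with ((suml SR (fun c => RC (q / (q + lam)) * (h c / Pi' SH c)) + B) - suml SR (fun c => RC (q / (q + lam)) * (h c / Pi' SH c))) by ring end.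
      rewrite E2. ring. }
  rewrite <- E5.
  rewrite (suml_ext SR _ (fun c => (h c / Pi' SH c) * RC (q / (q + lam)))) by (intros; ring).
  rewrite <- suml_scal.
  replace (suml SR (fun c => h c / Pi' SH c)) with (- (h x / prodl SR (fun z => x - z))).
  2:{ match goal with |- ?A = ?B => replace B with ((B + h x / prodl SR (fun z => x - z)) - h x / prodl SR (fun z => x - z)) by ring end.
      rewrite E4'. ring. }
  Ceqt. ring.
Qed.


End SH.

Section SI.

Lemma line_eq X (phib th a t : R) (rqp rqm rlp : nat -> C) :
  ME_valid X -> th > 0 -> 0 < a -> a < phib ->
  (forall k, (k <= mplus X)%nat -> (fst (rlp k) > phib)%R) ->
  (forall k, (k <= mminus X)%nat -> (fst (rqm k) < 0)%R) ->
  let u := (a, t) : C in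
  let SS := (RtoC phib :: map rlp (seq 0 (S (mplus X)))) ++ (RtoC (- th) :: map rqm (seq 0 (S (mminus X)))) in
  Cdiv (Cmul (Cmul (Psi_plus X rqp (Cmul Ci (RtoC th))) (mu_hat X phib rlp (Copp u)))
             (Psi_minus X rqm (Cmul (Copp Ci) u))) (Cadd u (RtoC th))
  = ((Psi_plus X rqp (Cmul Ci (RtoC th)) * Mmu X phib rlp * Mm X rqm * Dz X u) / prodl SS (fun c => u - c))%C.
Proof.
  intros HV Hth Ha0 Hab Hrl Hrm u SS.
  Local Open Scope C_scope.
  pose proof HV as [Hsig [Hppr [Hal [Hbe _]]]].
  assert (Hrlnz : forall k, (k <= mplus X)%nat -> rlp k <> 0) by (intros k Hk; apply fst_neq0; specialize (Hrl k Hk); simpl; lra).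
  assert (Hrmnz : forall k, (k <= mminus X)%nat -> rqm k <> 0) by (intros k Hk; apply fst_neq0; specialize (Hrm k Hk); simpl; lra).
  assert (Hul : forall k, (k <= mplus X)%nat -> u <> rlp k).
  { intros k Hk E. specialize (Hrl k Hk). rewrite <- E in Hrl. simpl in Hrl. lra. }
  assert (Hum : forall k, (k <= mminus X)%nat -> u <> rqm k).
  { intros k Hk E. specialize (Hrm k Hk). rewrite <- E in Hrm. simpl in Hrm. lra. }
  assert (Hup : u <> RC phib). { intro E. inversion E. lra. }
  rewrite mu_hat_form, Psi_minus_form; auto; [|lra].
  unfold SS. rewrite prodl_app, !prodl_cons. unfold Dz. toC. rewrite RtoC_opp.
  assert (HnRl : prodl (map rlp (seq 0 (S (mplus X)))) (fun z => u - z) <> 0).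
  { apply prodl_neq0. intros z Hz. apply Csub_neq0. intro E; subst z.
    apply in_mapseq in Hz. destruct Hz as [k [Hk E]]. apply (Hul k Hk); auto. }
  assert (HnRm : prodl (map rqm (seq 0 (S (mminus X)))) (fun z => u - z) <> 0).
  { apply prodl_neq0. intros z Hz. apply Csub_neq0. intro E; subst z.
    apply in_mapseq in Hz. destruct Hz as [k [Hk E]]. apply (Hum k Hk); auto. }
  assert (H1 : u - RC phib <> 0) by (apply Csub_neq0; auto).
  assert (H2 : u + RC th <> 0) by (apply fst_neq0; simpl; lra).
  assert (H3 : u - - RC th <> 0) by (apply fst_neq0; simpl; lra).
  Ceqt. field. repeat split; auto.
Qed.

End SI.


Lemma Re_div2pi (L : C) : (2 * PI * Re (L / Complex.RtoC (2 * PI))%C)%R = Re L.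
Proof. destruct L as [x y]. change R in x, y. unfold Re. simpl. assert (PI > 0) by apply PI_RGT_0. field. lra. Qed.
Lemma Im_div2pi (L : C) : (2 * PI * Re ((- Complex.Ci * (L / Complex.RtoC (2 * PI)))%C))%R = Im L.
Proof. destruct L as [x y]. change R in x, y. unfold Re, Im. simpl. assert (PI > 0) by apply PI_RGT_0. field. lra. Qed.

Theorem lemma10 (X : MEproc)
  (thstar phib q lam th : R) (rqp rqm rlp : nat -> Cx) :
  ME_valid X ->
  (* psi'(0) < 0 *)
  (exists d, derivable_pt_lim (psi X) 0 d /\ d < 0) ->
  (* theta^* : minimiser of psi on its domain; lambda^* = - psi(theta^* ) *)
  psi_dom X thstar -> (forall x, psi_dom X x -> psi X thstar <= psi X x) ->
  q > 0 -> th > 0 ->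
  0 < lam -> lam <= - psi X thstar ->
  (* phib = phibar(-lambda): inverse of psi left of theta^* *)
  psi_dom X phib -> phib <= thstar -> psi X phib = - lam ->
  (* rho_k^+(q), rho_j^-(q), rho_k^+(-lambda) *)
  root_enum X (RtoC q) (fun z => Re z > 0) (mplus X) rqp ->
  root_enum X (RtoC q) (fun z => Re z < 0) (mminus X) rqm ->
  root_enum X (RtoC (- lam)) (fun z => Re z > phib) (mplus X) rlp ->
  (* the roots of both equations are distinct *)
  simple_roots X (RtoC (- lam)) -> simple_roots X (RtoC q) ->
  (* phibar(-lambda), rho_k^+(-lambda), -theta, rho_j^-(q) all distinct *)
  NoDup (RtoC phib :: map rlp (seq 0 (S (mplus X)))
         ++ RtoC (- th) :: map rqm (seq 0 (S (mminus X)))) ->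
  forall a, 0 < a -> a < phib ->
    vertical_integral
      (fun u => Cdiv (Cmul (Cmul (Psi_plus X rqp (Cmul Ci (RtoC th)))
                                 (mu_hat X phib rlp (Copp u)))
                           (Psi_minus X rqm (Cmul (Copp Ci) u)))
                     (Cadd u (RtoC th)))
      a
      (Cmul (RtoC (q / (q + lam))) (mu_hat X phib rlp (RtoC th))).

Proof.
  intros HV Hder Htsd Htsm Hq Hth Hlam Hlst Hpd Hpl Hpp Hrqp Hrqm Hrlp Hs1 Hs2 HND a Ha0 Hab.
  Local Open Scope C_scope.
  pose proof HV as [Hsig [Hppr [Hal [Hbe _]]]].
  pose proof Hrqp as [Hp1 [Hp2 Hp3]]. pose proof Hrqm as [Hm1 [Hm2 Hm3]]. pose proof Hrlp as [Hl1 [Hl2 Hl3]].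
  assert (Hrmre : forall k, (k <= mminus X)%nat -> (fst (rqm k) < 0)%R) by (intros k Hk; apply (Hm1 k Hk)).
  assert (Hrlre : forall k, (k <= mplus X)%nat -> (fst (rlp k) > phib)%R) by (intros k Hk; apply (Hl1 k Hk)).
  assert (HRS := residue_sum X phib q lam th a rqp rqm rlp HV Hq Hth Hlam Ha0 Hab Hpd Hpp Hrqp Hrqm Hrlp HND).
  cbv zeta in HRS.
  set (SS := (RtoC phib :: map rlp (seq 0 (S (mplus X)))) ++ (RtoC (- th) :: map rqm (seq 0 (S (mminus X))))) in *.
  set (Phi := fun u => (Psi_plus X rqp (Cmul Ci (RtoC th)) * Mmu X phib rlp * Mm X rqm * Dz X u)%C) in *.
  assert (HNS : NoDup SS) by exact HND.
  assert (HSa : forall c, In c SS -> (fst c <> a)%R).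
  { intros c Hc. apply in_app_or in Hc. destruct Hc as [[<-|Hc]|[<-|Hc]]; simpl; try lra;
    apply in_mapseq in Hc; destruct Hc as [k [Hk ->]].
    specialize (Hrlre k Hk); lra. specialize (Hrmre k Hk); lra. }
  assert (HlenS : @length C SS = (mplus X + mminus X + 4)%nat).
  { unfold SS. rewrite length_app. simpl. rewrite !length_map, !length_seq. lia. }
  assert (HDz : is_poly (mplus X + mminus X) (Dz X)).
  { apply poly_mul; apply poly_CP; intros k.
    - apply (poly_ext 1 (fun z => 1 * z + - RC (alplus X k))). intros; ring. apply poly_lin.
    - apply (poly_ext 1 (fun z => 1 * z + RC (alminus X k))). intros; ring. apply poly_lin. }
  assert (HPhi : forall d, (mplus X + mminus X <= d)%nat -> is_poly d Phi).
  { intros d Hd. apply (poly_le (mplus X + mminus X)); auto. unfold Phi. apply poly_scal; auto. }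
  assert (E2 : suml SS (fun c => Phi c / Pi' SS c) = 0).
  { apply PF_sum0. exact HNS. rewrite HlenS; lia. apply HPhi. rewrite HlenS; lia. }

  assert (Hpi : RC (2 * PI) <> 0) by (apply RC_pos_neq0; assert (PI > 0)%R by apply PI_RGT_0; lra).
  set (r1 := fun c => Phi c / Pi' SS c / RC (2 * PI)).
  set (r2 := fun c => - Complex.Ci * r1 c).
  assert (Hg : forall t, Cmul (Cinv (Cmul (RtoC (2 * PI)) Ci))
      (Cmul (Cdiv (Cmul (Cmul (Psi_plus X rqp (Cmul Ci (RtoC th)))
                                 (mu_hat X phib rlp (Copp (Cadd (RtoC a) (Cmul Ci (RtoC t))))))
                           (Psi_minus X rqm (Cmul (Copp Ci) (Cadd (RtoC a) (Cmul Ci (RtoC t))))))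
                     (Cadd (Cadd (RtoC a) (Cmul Ci (RtoC t))) (RtoC th))) Ci)
      = suml SS (fun c => r1 c / ((a, t) - c))).
  { intros t. assert (Eu : Cadd (RtoC a) (Cmul Ci (RtoC t)) = (a, t)) by (apply Ceq; simpl; ring).
    rewrite Eu. rewrite line_eq; auto; try lra.
    change (prodl ((RtoC phib :: map rlp (seq 0 (S (mplus X)))) ++ RtoC (- th) :: map rqm (seq 0 (S (mminus X)))) (fun c : C => (a, t) - c)) with (prodl SS (fun c => (a,t) - c)).
    change (Psi_plus X rqp (Cmul Ci (RtoC th)) * Mmu X phib rlp * Mm X rqm * Dz X (a, t)) with (Phi (a,t)).
    assert (Hne : SS <> nil) by (unfold SS; simpl; congruence).
    assert (Hnotin : ~ In (a, t) SS). { intro H. apply (HSa _ H). reflexivity. }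
    rewrite (PF SS Phi (a, t) HNS Hne) by (auto; apply HPhi; rewrite HlenS; lia).
    toC. unfold r1.
    assert (HCi : Complex.Ci <> 0) by (intro E; inversion E; lra).
    transitivity (suml SS (fun c => Phi c / Pi' SS c / ((a, t) - c)) * / RC (2 * PI)).
    - Ceqt. field. auto.
    - rewrite suml_scal. apply suml_ext. intros c Hc.
      assert (Hc' : (a, t) - c <> 0). { apply Csub_neq0_fst. simpl. intro E. apply (HSa c Hc). auto. }
      Ceqt. field. repeat split; auto. apply Pi'_neq0. }
  assert (Hr1 : suml SS r1 = 0).
  { unfold r1. transitivity (suml SS (fun c => Phi c / Pi' SS c) * / RC (2 * PI)).
    rewrite suml_scal. apply suml_ext. intros; reflexivity. rewrite E2. ring. }
  assert (Hr2 : suml SS r2 = 0).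
  { unfold r2. rewrite (suml_ext SS _ (fun c => r1 c * (- Complex.Ci))) by (intros; ring).
    rewrite <- suml_scal, Hr1. ring. }
  assert (HL1 : suml SS (fun c => if Rlt_dec (fst c) a then r1 c else RC 0)
     = suml SS (fun c => if Rlt_dec (fst c) a then Phi c / Pi' SS c else RC 0) * / RC (2 * PI)).
  { rewrite suml_scal. apply suml_ext. intros c Hc. unfold r1. destruct (Rlt_dec (fst c) a); Ceqt; field; repeat split; auto; apply Pi'_neq0. }
  assert (HRS' : suml SS (fun c => if Rlt_dec (fst c) a then Phi c / Pi' SS c else RC 0)
     = RC (q / (q + lam)) * mu_hat X phib rlp (RtoC th)) by exact HRS.
  rewrite HRS' in HL1.
  assert (HL2 : suml SS (fun c => if Rlt_dec (fst c) a then r2 c else RC 0)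
     = - Complex.Ci * suml SS (fun c => if Rlt_dec (fst c) a then r1 c else RC 0)).
  { rewrite Cmult_comm, suml_scal. apply suml_ext. intros c Hc. unfold r2.
    destruct (Rlt_dec (fst c) a); Ceqt; ring. }
  unfold vertical_integral. cbv beta zeta. split.
  - match goal with |- improper_RInt ?f ?l =>
      replace f with (fun t => Re (suml SS (fun c => r1 c / ((a, t) - c)))) end.
    2:{ apply functional_extensionality. intros t. rewrite Hg. reflexivity. }
    match goal with |- improper_RInt _ ?l =>
      replace l with (2 * PI * Re (suml SS (fun c => if Rlt_dec (fst c) a then r1 c else RC 0)))%R end.
    apply vert_int_main; auto.
    rewrite HL1. apply Re_div2pi.
  - match goal with |- improper_RInt ?f ?l =>
      replace f with (fun t => Re (suml SS (fun c => r2 c / ((a, t) - c)))) end.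
    2:{ apply functional_extensionality. intros t. rewrite Hg.
        unfold r2. rewrite (suml_ext SS _ (fun c => (r1 c / ((a, t) - c)) * (- Complex.Ci))) by (intros; Ceqt; unfold Complex.Cdiv; ring).
        rewrite <- suml_scal. destruct (suml SS (fun c => r1 c / ((a, t) - c))) as [u v].
        unfold Re, Im. simpl. ring. }
    match goal with |- improper_RInt _ ?l =>
      replace l with (2 * PI * Re (suml SS (fun c => if Rlt_dec (fst c) a then r2 c else RC 0)))%R end.
    apply vert_int_main; auto.
    rewrite HL2, HL1. apply Im_div2pi.
Qed.
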